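(* Let $X$ be an ultrahomogeneous chain and $G=\mathrm{Aut}(X)$. (1.1) For $G$ with the permutation topology $\tau_\partial$, $L\wedge R=\mathcal U^\partial$, and the Roelcke compactification of $(G,\tau_\partial)$ is the closure of $\imath(G)$ in $(\beta_\partial X)^X$. (1.2) For $G$ with the topology of pointwise convergence $\tau_p$, $R_{\mathcal K}=\mathcal U^p$, and the completion of $(G,\tau_p)$ with respect to $R_{\mathcal K}$ is the closure of $\imath(G)$ in $(\beta_pX)^X$. If moreover $X$ is a continuous ultrahomogeneous chain, then: (2.1) the Roelcke compactification of $(G,\tau_\partial)$ is the enveloping Ellis semigroup, i.e. the closure of $\jmath(G)$ in $(\beta_\partial X)^{\beta_\partial X}$; (2.2) the completion of $(G,\tau_p)$ with respect to $R_{\mathcal K}$ is the enveloping Ellis semigroup, i.e. the closure of $\jmath(G)$ in $(\beta_pX)^{\beta_pX}$.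
   Context: A chain is a linearly ordered set; $\mathrm{Aut}(X)$ its group of order-preserving bijections. $X$ is ultrahomogeneous if for every $n$ and all $x_1<\dots<x_n$, $y_1<\dots<y_n$ there is $g\in\mathrm{Aut}(X)$ with $g(x_k)=y_k$. $X$ is continuous if it has no proper gaps (every cut $(A,B)$ of $X$ with $A,B$ nonempty has a largest element of $A$ or a smallest element of $B$). $\tau$ is the order topology, $\tau_d$ the discrete topology on $X$. $\tau_p$ is the topology of pointwise convergence on $G$ w.r.t. $(X,\tau)$; $\tau_\partial$ is the permutation topology (identity neighbourhood base: pointwise stabilizers $\mathrm{St}_{x_1,\dots,x_n}$). $\mathcal U_X^p$ is the maximal equiuniformity on $(X,\tau)$ for $(G,\tau_p)$ and $\beta_pX$ the completion of $X$ with respect to it; $\mathcal U_X^\partial$ is the maximal equiuniformity on $(X,\tau_d)$ for $(G,\tau_\partial)$ (base: partitions $(\gets,x_1),\{x_1\},(x_1,x_2),\dots,\{x_n\},(x_n,\to)$) and $\beta_\partial X$ the completion with respect to it. For $*\in\{p,\partial\}$, $\mathcal U^*$ is the uniformity on $G$ with base the coverings $\{\{h\mid (g(x_k),h(x_k))\in\mathrm U,\ k\le n\}\mid g\in G\}$, $x_k\in X$, $\mathrm U$ an entourage of $\mathcal U^*_X$ (equivalently, the restriction to $\imath(G)$ of the product uniformity on $X^X$). $\imath(g)=(g(x))_{x\in X}$, $\jmath(g)=(g(x))_{x\in\beta_*X}$ using the continuous extension of $g$. $R_{\mathcal K}$ is the uniformity on $(G,\tau_p)$ with base the coverings $\{Og\,\mathrm{St}_{x_1,\dots,x_n}\mid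 g\in G\}$, $O$ a $\tau_p$-neighbourhood of the identity. $L\wedge R$ is the Roelcke uniformity (greatest lower bound of left and right uniformities); the Roelcke compactification is the completion with respect to it. *)

(* Defs.v *)
(* all topological / uniform notions are set up by hand on raw
   predicates, because several different uniformities/topologies live on the
   same carrier at once. *)
From Stdlib Require Import List Sorting.Sorted.
Import ListNotations.

Definition rel (T : Type) := T -> T -> Prop.
Definition unif (T : Type) := rel T -> Prop.
Definition topo (T : Type) := (T -> Prop) -> Prop.

Definition is_unif {T : Type} (U : unif T) : Prop :=
  U (fun _ _ => True) /\
  (forall E F : rel T, U E -> (forall a b, E a b -> F a b) -> U F) /\
  (forall E F : rel T, U E -> U F -> U (fun a b => E a b /\ F a b)) /\
  (forall E, U E -> forall a, E a a) /\
  (forall E, U E -> U (fun a b => E b a)) /\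
  (forall E, U E -> exists F, U F /\ forall a b c, F a b -> F b c -> E a c).

Definition subunif {T : Type} (W U : unif T) : Prop := forall E, W E -> U E.

Definition same_unif {T : Type} (U V : unif T) : Prop := forall E, U E <-> V E.

(* greatest lower bound U1 /\ U2 in the lattice of uniformities: the union of
   all uniformities coarser than both (this family is directed, so its union is
   a uniformity and is the greatest lower bound). *)
Definition meet_unif {T : Type} (U1 U2 : unif T) : unif T :=
  fun E => exists W, is_unif W /\ subunif W U1 /\ subunif W U2 /\ W E.

Definition unif_open {T : Type} (U : unif T) (A : T -> Prop) : Prop :=
  forall a, A a -> exists E, U E /\ forall b, E a b -> A b.

Definition separated {T : Type} (U : unif T) : Prop :=
  forall a b, (forall E, U E -> E a b) -> a = b.

Definition is_filter {T : Type} (F : (T -> Prop) -> Prop) : Prop :=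
  F (fun _ => True) /\ ~ F (fun _ => False) /\
  (forall A B : T -> Prop, F A -> (forall x, A x -> B x) -> F B) /\
  (forall A B, F A -> F B -> F (fun x => A x /\ B x)).

Definition cauchy {T : Type} (U : unif T) (F : (T -> Prop) -> Prop) : Prop :=
  forall E, U E -> exists A, F A /\ forall a b, A a -> A b -> E a b.

Definition converges_to {T : Type} (U : unif T) (F : (T -> Prop) -> Prop) (t : T) : Prop :=
  forall E, U E -> F (E t).

Definition complete {T : Type} (U : unif T) : Prop :=
  forall F, is_filter F -> cauchy U F -> exists t, converges_to U F t.

Definition unif_embedding {S Z : Type} (W : unif S) (UZ : unif Z) (iota : S -> Z) : Prop :=
  (forall a b, iota a = iota b -> a = b) /\
  (forall E, W E <-> exists F, UZ F /\ forall a b, F (iota a) (iota b) -> E a b).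

Definition dense_image {S Z : Type} (UZ : unif Z) (iota : S -> Z) : Prop :=
  forall z E, UZ E -> exists s, E z (iota s).

Definition is_completion {X B : Type} (U : unif X) (UB : unif B) (e : X -> B) : Prop :=
  is_unif UB /\ separated UB /\ complete UB /\ unif_embedding U UB e /\ dense_image UB e.

(* "the completion of (S,W) is the closure of iota(S) in (Z,UZ)":
   Z is a complete Hausdorff uniform space and iota is a uniform embedding,
   so that the closure of iota(S), with iota, is the completion of (S,W). *)
Definition completion_is_closure {S Z : Type} (W : unif S) (UZ : unif Z) (iota : S -> Z) : Prop :=
  is_unif UZ /\ separated UZ /\ complete UZ /\ unif_embedding W UZ iota.

Definition prod_unif {I B : Type} (UB : unif B) : unif (I -> B) :=
  fun E => exists (is : list I) (F : rel B), UB F /\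
    forall f f' : I -> B, (forall i, In i is -> F (f i) (f' i)) -> E f f'.

Definition is_chain {X : Type} (lt : rel X) : Prop :=
  (forall x, ~ lt x x) /\
  (forall x y z, lt x y -> lt y z -> lt x z) /\
  (forall x y, lt x y \/ x = y \/ lt y x).

Definition is_aut {X : Type} (lt : rel X) (g : X -> X) : Prop :=
  (forall x y, g x = g y -> x = y) /\ (forall y, exists x, g x = y) /\
  (forall x y, lt x y <-> lt (g x) (g y)).

Definition Aut {X : Type} (lt : rel X) := {g : X -> X | is_aut lt g}.

Definition ap {X : Type} {lt : rel X} (g : Aut lt) : X -> X := proj1_sig g.

Definition ultrahomogeneous {X : Type} (lt : rel X) : Prop :=
  forall xs ys : list X, length xs = length ys ->
    StronglySorted lt xs -> StronglySorted lt ys ->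
    exists g : Aut lt, map (ap g) xs = ys.

Definition continuous_chain {X : Type} (lt : rel X) : Prop :=
  forall A B : X -> Prop, (exists a, A a) -> (exists b, B b) ->
    (forall x, A x \/ B x) -> (forall a b, A a -> B b -> lt a b) ->
    (exists m, A m /\ forall a, A a -> a = m \/ lt a m) \/
    (exists m, B m /\ forall b, B b -> b = m \/ lt m b).

Definition order_basic {X : Type} (lt : rel X) (V : X -> Prop) : Prop :=
  (forall x, V x) \/
  (exists b, forall x, V x <-> lt x b) \/
  (exists a, forall x, V x <-> lt a x) \/
  (exists a b, forall x, V x <-> (lt a x /\ lt x b)).

Definition order_top {X : Type} (lt : rel X) : topo X :=
  fun U => forall x, U x -> exists V, order_basic lt V /\ V x /\ forall y, V y -> U y.

Definition ptop {X : Type} (lt : rel X) : topo (Aut lt) :=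
  fun U => forall g, U g -> exists l : list (X * (X -> Prop)),
    (forall p, In p l -> order_top lt (snd p) /\ snd p (ap g (fst p))) /\
    (forall h, (forall p, In p l -> snd p (ap h (fst p))) -> U h).

Definition perm_top {X : Type} (lt : rel X) : topo (Aut lt) :=
  fun U => forall g, U g -> exists xs : list X,
    forall h, (forall x, In x xs -> ap h x = ap g x) -> U h.

Definition nbhd_id {X : Type} {lt : rel X} (tau : topo (Aut lt)) (O : Aut lt -> Prop) : Prop :=
  exists V, tau V /\ (forall g : Aut lt, (forall x, ap g x = x) -> V g) /\
            (forall g, V g -> O g).

(* left uniformity: (g,h) with g^-1 h in O ;  right: h g^-1 in O *)
Definition left_unif {X : Type} {lt : rel X} (tau : topo (Aut lt)) : unif (Aut lt) :=
  fun E => exists O, nbhd_id tau O /\ forall g h : Aut lt,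
    (exists o, O o /\ forall x, ap h x = ap g (ap o x)) -> E g h.

Definition right_unif {X : Type} {lt : rel X} (tau : topo (Aut lt)) : unif (Aut lt) :=
  fun E => exists O, nbhd_id tau O /\ forall g h : Aut lt,
    (exists o, O o /\ forall x, ap h x = ap o (ap g x)) -> E g h.

Definition roelcke_unif {X : Type} {lt : rel X} (tau : topo (Aut lt)) : unif (Aut lt) :=
  meet_unif (left_unif tau) (right_unif tau).

(* R_K: base coverings { O g St_xs | g in G } *)
Definition in_OgSt {X : Type} {lt : rel X} (O : Aut lt -> Prop) (g : Aut lt)
  (xs : list X) (h : Aut lt) : Prop :=
  exists o s : Aut lt, O o /\ (forall x, In x xs -> ap s x = x) /\
    forall x, ap h x = ap o (ap g (ap s x)).

Definition RK {X : Type} (lt : rel X) : unif (Aut lt) :=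
  fun E => exists O xs, nbhd_id (ptop lt) O /\ forall h1 h2,
    (exists g, in_OgSt O g xs h1 /\ in_OgSt O g xs h2) -> E h1 h2.

(* U_X^partial: base = partitions (<-,x1),{x1},(x1,x2),...,{xn},(xn,->) *)
Definition same_block {X : Type} (lt : rel X) (xs : list X) (a b : X) : Prop :=
  forall x, In x xs -> (a = x <-> b = x) /\ (lt a x <-> lt b x).

Definition UXd {X : Type} (lt : rel X) : unif X :=
  fun E => exists xs, forall a b, same_block lt xs a b -> E a b.

Definition UG {X : Type} (lt : rel X) (UX : unif X) : unif (Aut lt) :=
  fun E => exists (xs : list X) (F : rel X), UX F /\ forall h1 h2 : Aut lt,
    (exists g : Aut lt, forall x, In x xs -> F (ap g x) (ap h1 x) /\ F (ap g x) (ap h2 x))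
    -> E h1 h2.

Definition is_equiunif {X : Type} (lt : rel X) (tauX : topo X) (tauG : topo (Aut lt))
  (U : unif X) : Prop :=
  is_unif U /\
  (forall A, tauX A <-> unif_open U A) /\
  (forall (g : Aut lt) E, U E -> U (fun x y => E (ap g x) (ap g y))) /\
  (forall E, U E -> exists O, nbhd_id tauG O /\ forall g x, O g -> E x (ap g x)).

Definition max_equiunif {X : Type} (lt : rel X) (tauX : topo X) (tauG : topo (Aut lt))
  (U : unif X) : Prop :=
  is_equiunif lt tauX tauG U /\
  forall V, is_equiunif lt tauX tauG V -> subunif V U.

Definition ext_ok {X B : Type} (lt : rel X) (UB : unif B) (e : X -> B)
  (ext : Aut lt -> B -> B) : Prop :=
  forall g : Aut lt, (forall x, ext g (e x) = e (ap g x)) /\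
    (forall A, unif_open UB A -> unif_open UB (fun b => A (ext g b))).

(* Main.v *)
Require Import Defs.
From Stdlib Require Import List Sorting.Sorted Classical ClassicalEpsilon FunctionalExtensionality.
Import ListNotations.

Lemma choose_fn {A B : Type} (P : A -> B -> Prop) (Q : A -> Prop) (b0 : B) :
  (forall a, Q a -> exists b, P a b) -> exists f : A -> B, forall a, Q a -> P a (f a).
Proof.
  intros H.
  assert (H' : forall a, exists b, Q a -> P a b).
  { intros a. destruct (classic (Q a)) as [q|nq].
    - destruct (H a q) as [b Hb]. exists b; auto.
    - exists b0; tauto. }
  exists (fun a => proj1_sig (constructive_indefinite_description _ (H' a))).
  intros a qa. exact (proj2_sig (constructive_indefinite_description _ (H' a)) qa).
Qed.

Lemma SS_weaken {A} (R R' : A -> A -> Prop) (L : list A) :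
  (forall a b, In a L -> In b L -> R a b -> R' a b) -> StronglySorted R L -> StronglySorted R' L.
Proof.
  induction L as [|a L IH]; intros HR HS; constructor.
  - inversion HS; subst. apply IH; auto. intros; apply HR; simpl; auto.
  - inversion HS; subst. rewrite Forall_forall in *. intros b hb. apply HR; simpl; auto.
Qed.

Lemma SS_map {A B} (f : A -> B) (R : B -> B -> Prop) (L : list A) :
  StronglySorted (fun a b => R (f a) (f b)) L -> StronglySorted R (map f L).
Proof.
  induction L as [|a L IH]; intros HS; simpl; constructor; inversion HS; subst; auto.
  rewrite Forall_forall in *. intros y hy. apply in_map_iff in hy. destruct hy as [b [<- hb]]. auto.
Qed.

Section Chain.
Variable X : Type.
Variable lt : rel X.
Hypothesis Hch : is_chain lt.

Lemma lt_irr x : ~ lt x x.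
Proof. apply Hch. Qed.
Lemma lt_tr x y z : lt x y -> lt y z -> lt x z.
Proof. apply Hch. Qed.
Lemma tri x y : lt x y \/ x = y \/ lt y x.
Proof. apply Hch. Qed.
Lemma lt_asym x y : lt x y -> lt y x -> False.
Proof. intros; apply (lt_irr x); eapply lt_tr; eauto. Qed.
Lemma lt_neq x y : lt x y -> x <> y.
Proof. intros h e; subst; eapply lt_irr; eauto. Qed.

Lemma ap_inj (g : Aut lt) x y : ap g x = ap g y -> x = y.
Proof. apply (proj2_sig g). Qed.
Lemma ap_surj (g : Aut lt) y : exists x, ap g x = y.
Proof. apply (proj2_sig g). Qed.
Lemma ap_lt (g : Aut lt) x y : lt x y <-> lt (ap g x) (ap g y).
Proof. apply (proj2_sig g). Qed.

Lemma aut_ext (g h : Aut lt) : (forall x, ap g x = ap h x) -> g = h.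
Proof.
  destruct g as [g pg], h as [h ph]; unfold ap; simpl; intros H.
  assert (g = h) by (apply functional_extensionality; auto). subst.
  f_equal. apply proof_irrelevance.
Qed.

Lemma id_is_aut : is_aut lt (fun x => x).
Proof. split; [|split]; intros; eauto; tauto. Qed.
Definition id_aut : Aut lt := exist _ (fun x => x) id_is_aut.

Lemma comp_is_aut (g h : Aut lt) : is_aut lt (fun x => ap g (ap h x)).
Proof.
  split; [|split].
  - intros x y e. apply ap_inj in e. apply ap_inj in e. auto.
  - intros y. destruct (ap_surj g y) as [z <-]. destruct (ap_surj h z) as [x <-]. eauto.
  - intros x y. rewrite (ap_lt h), (ap_lt g). tauto.
Qed.
Definition comp_aut (g h : Aut lt) : Aut lt := exist _ _ (comp_is_aut g h).

Definition inv_fn (g : Aut lt) (y : X) : X :=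
  proj1_sig (constructive_indefinite_description _ (ap_surj g y)).
Lemma inv_r (g : Aut lt) y : ap g (inv_fn g y) = y.
Proof. unfold inv_fn. exact (proj2_sig (constructive_indefinite_description _ (ap_surj g y))). Qed.
Lemma inv_l (g : Aut lt) x : inv_fn g (ap g x) = x.
Proof. apply (ap_inj g). apply inv_r. Qed.
Lemma inv_is_aut (g : Aut lt) : is_aut lt (inv_fn g).
Proof.
  split; [|split].
  - intros x y e. rewrite <- (inv_r g x), <- (inv_r g y), e. auto.
  - intros y. exists (ap g y). apply inv_l.
  - intros x y. rewrite (ap_lt g (inv_fn g x) (inv_fn g y)), !inv_r. tauto.
Qed.
Definition inv_aut (g : Aut lt) : Aut lt := exist _ _ (inv_is_aut g).

Lemma ap_lt_inv (g : Aut lt) x y : lt (ap g x) y <-> lt x (inv_fn g y).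
Proof. rewrite (ap_lt g x (inv_fn g y)), inv_r. tauto. Qed.
Lemma ap_lt_inv' (g : Aut lt) x y : lt y (ap g x) <-> lt (inv_fn g y) x.
Proof. rewrite (ap_lt g (inv_fn g y) x), inv_r. tauto. Qed.

Definition consistent (ps : list (X * X)) : Prop :=
  forall p q, In p ps -> In q ps -> (lt (fst p) (fst q) <-> lt (snd p) (snd q)).

Let Rf (a b : X * X) := lt (fst a) (fst b).

Lemma cons_eq (a b : X * X) : (lt (fst a) (fst b) <-> lt (snd a) (snd b)) ->
  (lt (fst b) (fst a) <-> lt (snd b) (snd a)) -> fst a = fst b -> a = b.
Proof.
  destruct a as [a1 a2], b as [b1 b2]; simpl; intros h1 h2 e; subst.
  destruct (tri a2 b2) as [h|[h|h]].
  - exfalso. apply h1 in h. eapply lt_irr; eauto.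
  - subst; auto.
  - exfalso. apply h2 in h. eapply lt_irr; eauto.
Qed.

Lemma insert_ex (a : X * X) (L : list (X * X)) :
  StronglySorted Rf L -> consistent (a :: L) ->
  exists L', StronglySorted Rf L' /\ forall q, In q L' <-> (q = a \/ In q L).
Proof.
  induction L as [|b L IH]; intros HS HC.
  - exists [a]. split. constructor; constructor. intros q; simpl; split; intros [h|h]; auto.
  - inversion HS as [|? ? HS' HF]; subst.
    destruct (tri (fst a) (fst b)) as [h|[h|h]].
    + exists (a :: b :: L). split.
      * constructor; auto. constructor; auto. rewrite Forall_forall in *.
        intros y hy. unfold Rf in *. eapply lt_tr; eauto.
      * intros q; simpl; split; [intros [h1|[h1|h1]]; auto|intros [h1|[h1|h1]]; auto].
    + assert (a = b).
      { apply cons_eq; try apply HC; simpl; auto. }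
      subst. exists (b :: L). split; auto. intros q; simpl; split; [tauto|]. intros [->|h2]; tauto.
    + destruct (IH HS') as [L' [HS'' HL']].
      { intros p q hp hq. apply HC; simpl in *; intuition. }
      exists (b :: L'). split.
      * constructor; auto. rewrite Forall_forall in *. intros y hy.
        apply HL' in hy. destruct hy as [->|hy]; auto.
      * intros q. simpl. rewrite HL'. tauto.
Qed.

Lemma sort_ex (ps : list (X * X)) : consistent ps ->
  exists L, StronglySorted Rf L /\ forall q, In q L <-> In q ps.
Proof.
  induction ps as [|a ps IH]; intros HC.
  - exists []. split; [constructor|tauto].
  - destruct IH as [L [HS HL]].
    { intros p q hp hq; apply HC; simpl; auto. }
    destruct (insert_ex a L HS) as [L' [HS' HL']].
    { intros p q hp hq. apply HC; simpl in *.
      - destruct hp as [->|hp]; [auto|right; apply HL; auto].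
      - destruct hq as [->|hq]; [auto|right; apply HL; auto]. }
    exists L'. split; auto. intros q. rewrite HL'. simpl. rewrite HL. split; intros [h|h]; auto.
Qed.

Lemma map_eq_in (g : X -> X) (L : list (X * X)) :
  map g (map fst L) = map snd L -> forall q, In q L -> g (fst q) = snd q.
Proof.
  induction L as [|a L IH]; simpl; intros H q hq; [contradiction|].
  injection H; intros. destruct hq as [->|hq]; auto.
Qed.

Hypothesis Hu : ultrahomogeneous lt.

Lemma PIE (ps : list (X * X)) : consistent ps ->
  exists g : Aut lt, forall p, In p ps -> ap g (fst p) = snd p.
Proof.
  intros HC. destruct (sort_ex ps HC) as [L [HS HL]].
  destruct (Hu (map fst L) (map snd L)) as [g Hg].
  - rewrite !length_map; auto.
  - apply SS_map. exact HS.
  - apply SS_map. eapply SS_weaken; [|exact HS].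
    intros a b ha hb h. apply (HC a b); try apply HL; auto.
  - exists g. intros p hp. apply (map_eq_in (ap g) L); auto. apply HL; auto.
Qed.

Definition nontriv := exists a b, lt a b.

Lemma nomax : nontriv -> forall x, exists y, lt x y.
Proof.
  intros [a [b hab]] x.
  destruct (PIE [(a, x)]) as [g Hg].
  { intros p q hp hq; simpl in *; destruct hp as [<-|[]]; destruct hq as [<-|[]]; simpl.
    split; intro h; exfalso; eapply lt_irr; eauto. }
  exists (ap g b). specialize (Hg (a, x) (or_introl eq_refl)). simpl in Hg.
  rewrite <- Hg. apply ap_lt; auto.
Qed.

Lemma nomin : nontriv -> forall x, exists y, lt y x.
Proof.
  intros [a [b hab]] x.
  destruct (PIE [(b, x)]) as [g Hg].
  { intros p q hp hq; simpl in *; destruct hp as [<-|[]]; destruct hq as [<-|[]]; simpl.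
    split; intro h; exfalso; eapply lt_irr; eauto. }
  exists (ap g a). specialize (Hg (b, x) (or_introl eq_refl)). simpl in Hg.
  rewrite <- Hg. apply ap_lt; auto.
Qed.

Lemma dense x y : lt x y -> exists c, lt x c /\ lt c y.
Proof.
  intros hxy. destruct (nomax (ex_intro _ x (ex_intro _ y hxy)) y) as [z hz].
  assert (hxz : lt x z) by (eapply lt_tr; eauto).
  destruct (PIE [(x, x); (z, y)]) as [g Hg].
  { intros p q hp hq; simpl in *.
    destruct hp as [<-|[<-|[]]]; destruct hq as [<-|[<-|[]]]; simpl; split; intro h;
      auto; exfalso; solve [eapply lt_irr; eauto | eapply lt_asym; eauto]. }
  exists (ap g y).
  pose proof (Hg (x, x) ltac:(simpl; auto)) as e1. pose proof (Hg (z, y) ltac:(simpl; auto)) as e2.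
  simpl in *. split.
  - rewrite <- e1. apply ap_lt; auto.
  - pose proof (proj1 (ap_lt g y z) hz) as hh. rewrite e2 in hh. exact hh.
Qed.

Lemma triv_eq : ~ nontriv -> forall a b : X, a = b.
Proof.
  intros H a b. destruct (tri a b) as [h|[h|h]]; auto; exfalso; apply H; do 2 eexists; eauto.
Qed.

End Chain.

Section Unif.
Variable T : Type.
Variable U : unif T.
Hypothesis HU : is_unif U.

Lemma u_full : U (fun _ _ => True).
Proof. destruct HU as [h _]. exact h. Qed.
Lemma u_up (E F : rel T) : U E -> (forall a b, E a b -> F a b) -> U F.
Proof. destruct HU as [_ [h _]]. apply h. Qed.
Lemma u_cap (E F : rel T) : U E -> U F -> U (fun a b => E a b /\ F a b).
Proof. destruct HU as [_ [_ [h _]]]. apply h. Qed.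
Lemma u_refl E : U E -> forall a, E a a.
Proof. destruct HU as [_ [_ [_ [h _]]]]. apply h. Qed.
Lemma u_sym E : U E -> U (fun a b => E b a).
Proof. destruct HU as [_ [_ [_ [_ [h _]]]]]. apply h. Qed.
Lemma u_comp E : U E -> exists F, U F /\ forall a b c, F a b -> F b c -> E a c.
Proof. destruct HU as [_ [_ [_ [_ [_ h]]]]]. apply h. Qed.

Lemma sym_half E : U E -> exists F, U F /\ (forall a b, F a b -> F b a) /\
  (forall a b c, F a b -> F b c -> E a c).
Proof.
  intros hE. destruct (u_comp E hE) as [G [hG hc]].
  exists (fun a b => G a b /\ G b a). split; [|split].
  - apply u_cap; auto. apply u_sym; auto.
  - tauto.
  - intros a b c [h1 _] [h2 _]. eauto.
Qed.

Lemma third E : U E -> exists F, U F /\ (forall a b, F a b -> F b a) /\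
  (forall a b c d, F a b -> F b c -> F c d -> E a d).
Proof.
  intros hE. destruct (sym_half E hE) as [G [hG [sG cG]]].
  destruct (sym_half G hG) as [H [hH [sH cH]]].
  exists (fun a b => H a b /\ G a b). split; [|split].
  - apply u_cap; auto.
  - intros a b [h1 h2]; split; auto.
  - intros a b c d [h1 _] [h2 _] [_ h3]. apply (cG a c d); [apply (cH a b c); auto|auto].
Qed.

Lemma u_list {I} (l : list I) (P : I -> rel T) :
  (forall i, In i l -> U (P i)) -> U (fun a b => forall i, In i l -> P i a b).
Proof.
  induction l as [|i l IH]; intros H.
  - eapply u_up; [apply u_full|]. simpl; tauto.
  - eapply u_up; [apply (u_cap (P i)); [apply H; simpl; auto|apply IH; intros; apply H; simpl; auto]|].
    simpl. intros a b [h1 h2] j [<-|hj]; auto.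
Qed.

Lemma filter_list (F : (T -> Prop) -> Prop) {I} (l : list I) (P : I -> T -> Prop) :
  is_filter F -> (forall i, In i l -> F (P i)) -> F (fun a => forall i, In i l -> P i a).
Proof.
  intros HF. induction l as [|i l IH]; intros H.
  - eapply (proj1 (proj2 (proj2 HF))); [apply (proj1 HF)|]. simpl; tauto.
  - eapply (proj1 (proj2 (proj2 HF))); [apply (proj2 (proj2 (proj2 HF))); [apply (H i); simpl; auto|apply IH; intros; apply H; simpl; auto]|].
    simpl. intros a [h1 h2] j [<-|hj]; auto.
Qed.

Lemma cont_nbhd (f : T -> T) :
  (forall A, unif_open U A -> unif_open U (fun b => A (f b))) ->
  forall b F, U F -> exists F', U F' /\ forall c, F' b c -> F (f b) (f c).
Proof.
  intros Hf b F hF.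
  set (A := fun d => exists G, U G /\ forall d', G d d' -> F (f b) d').
  assert (hA : unif_open U A).
  { intros d [G [hG hd]]. destruct (u_comp G hG) as [G' [hG' cG]].
    exists G'. split; auto. intros d2 h2. exists G'. split; auto. intros d3 h3. apply hd. eauto. }
  destruct (Hf A hA b) as [F' [hF' H']].
  { exists F. split; auto. }
  exists F'. split; auto. intros c hc. destruct (H' c hc) as [G [hG hG']]. apply hG'. apply (u_refl G hG).
Qed.

End Unif.

Section Prod.
Variable I B : Type.
Variable UB : unif B.
Hypothesis HUB : is_unif UB.

Lemma prod_is_unif : is_unif (@prod_unif I B UB).
Proof.
  unfold prod_unif. split; [|split; [|split; [|split; [|split]]]].
  - exists [], (fun _ _ => True). split; [apply u_full; auto|auto].
  - intros E F [is [F0 [h1 h2]]] hEF. exists is, F0. split; auto.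
  - intros E F [is [F0 [h1 h2]]] [is' [F0' [h1' h2']]].
    exists (is ++ is'), (fun a b => F0 a b /\ F0' a b). split; [apply u_cap; auto|].
    intros f f' h. split; [apply h2|apply h2']; intros i hi; apply h; apply in_or_app; auto.
  - intros E [is [F0 [h1 h2]]] a. apply h2. intros; apply (u_refl _ UB HUB); auto.
  - intros E [is [F0 [h1 h2]]]. exists is, (fun a b => F0 b a). split; [exact (u_sym _ UB HUB F0 h1)|].
    intros f f' h. apply h2. auto.
  - intros E [is [F0 [h1 h2]]]. destruct (u_comp _ UB HUB F0 h1) as [G [hG cG]].
    exists (fun f f' => forall i, In i is -> G (f i) (f' i)). split.
    + exists is, G. split; auto.
    + intros a b c hab hbc. apply h2. intros i hi. eauto.
Qed.

Lemma prod_separated : separated UB -> separated (@prod_unif I B UB).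
Proof.
  intros Hs f f' H. apply functional_extensionality. intros i. apply Hs. intros E hE.
  apply (H (fun g g' => E (g i) (g' i))). exists [i], E. split; auto.
  intros g g' h. apply h. simpl; auto.
Qed.

Lemma prod_complete : complete UB -> complete (@prod_unif I B UB).
Proof.
  intros Hc F HF Hcy.
  assert (Hi : forall i, exists t, converges_to UB (fun A => F (fun f => A (f i))) t).
  { intros i. apply Hc.
    - destruct HF as [f1 [f2 [f3 f4]]]. split; [|split; [|split]].
      + eapply f3; [exact f1|]. auto.
      + intros h. apply f2. eapply f3; [exact h|]. auto.
      + intros A A' h hA. eapply f3; [exact h|]. simpl; auto.
      + intros A A' h h'. apply f4; auto.
    - intros E hE. destruct (Hcy (fun f f' => E (f i) (f' i))) as [A [hA hA']].
      { exists [i], E. split; auto. intros f f' h; apply h; simpl; auto. }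
      exists (fun b => exists f, A f /\ f i = b). split.
      + eapply (proj1 (proj2 (proj2 HF))); [exact hA|]. intros f hf. exists f; auto.
      + intros a b [f [hf <-]] [f' [hf' <-]]. auto. }
  exists (fun i => proj1_sig (constructive_indefinite_description _ (Hi i))).
  intros E [is [F0 [h1 h2]]].
  eapply (proj1 (proj2 (proj2 HF))); [apply (filter_list _ F is (fun i f => F0 (proj1_sig (constructive_indefinite_description _ (Hi i))) (f i)) HF)|].
  - intros i _. exact (proj2_sig (constructive_indefinite_description _ (Hi i)) F0 h1).
  - intros f hf. apply h2. auto.
Qed.

End Prod.

Section Ext.
Variable Y B : Type.
Variable U : unif Y.
Variable UB : unif B.
Variable e : Y -> B.
Hypothesis Hc : is_completion U UB e.

Lemma c_unif : is_unif UB.  Proof. apply Hc. Qed.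
Lemma c_sep : separated UB.  Proof. apply Hc. Qed.
Lemma c_complete : complete UB.  Proof. apply Hc. Qed.
Lemma c_inj a b : e a = e b -> a = b.  Proof. destruct Hc as [_ [_ [_ [[h _] _]]]]. apply h. Qed.
Lemma c_emb E : U E <-> exists F, UB F /\ forall a b, F (e a) (e b) -> E a b.
Proof. destruct Hc as [_ [_ [_ [[_ h] _]]]]. apply h. Qed.
Lemma c_dense z E : UB E -> exists s, E z (e s).  Proof. destruct Hc as [_ [_ [_ [_ h]]]]. apply h. Qed.

Lemma c_pull F : UB F -> U (fun a b => F (e a) (e b)).
Proof. intros h. apply c_emb. exists F; auto. Qed.

Variable phi : Y -> Y.
Hypothesis Hphi : forall E, U E -> U (fun x y => E (phi x) (phi y)).

Lemma ext_exists : exists psi : B -> B, (forall x, psi (e x) = e (phi x)) /\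
  (forall A, unif_open UB A -> unif_open UB (fun b => A (psi b))).
Proof.
  pose proof c_unif as HB.
  assert (HL : forall b, exists c, forall E, UB E -> exists F, UB F /\
                 forall y, F b (e y) -> E c (e (phi y))).
  { intros b.
    destruct (c_complete (fun A => exists F, UB F /\ forall y, F b (e y) -> A (e (phi y)))) as [c hc].
    - split; [|split; [|split]].
      + exists (fun _ _ => True). split; auto. apply u_full; auto.
      + intros [F [hF h]]. destruct (c_dense b F hF) as [s hs]. exact (h s hs).
      + intros A A' [F [hF h]] hA. exists F; split; auto.
      + intros A A' [F [hF h]] [F' [hF' h']]. exists (fun a b => F a b /\ F' a b).
        split; [apply u_cap; auto|]. intros y [h1 h2]; auto.
    - intros E hE.
      assert (hP : U (fun a c => E (e (phi a)) (e (phi c)))).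
      { apply (Hphi (fun a c => E (e a) (e c))). apply c_pull; auto. }
      apply c_emb in hP. destruct hP as [F [hF hF']].
      destruct (sym_half _ _ HB F hF) as [F1 [hF1 [s1 c1]]].
      exists (fun z => exists y, F1 b (e y) /\ z = e (phi y)). split.
      + exists F1. split; auto. intros y hy. exists y; auto.
      + intros a a' [y [hy ->]] [y' [hy' ->]]. apply hF'. eapply c1; [apply s1; exact hy|exact hy'].
    - exists c. intros E hE. exact (hc E hE). }
  set (psi := fun b => proj1_sig (constructive_indefinite_description _ (HL b))).
  assert (hpsi : forall b (_ : True) E, UB E -> exists F, UB F /\ forall y, F b (e y) -> E (psi b) (e (phi y))).
  { intros b _. exact (proj2_sig (constructive_indefinite_description _ (HL b))). }
  clearbody psi.
  exists psi. split.
  - intros x. apply c_sep. intros E hE. destruct (hpsi (e x) I E hE) as [F [hF h]].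
    apply h. apply (u_refl _ _ HB F hF).
  - intros A hA b hb. destruct (hA (psi b) hb) as [E [hE hE']].
    destruct (sym_half _ _ HB E hE) as [E1 [hE1 [s1 c1]]].
    destruct (hpsi b I E1 hE1) as [Fb [hFb hFbP]].
    destruct (u_comp _ _ HB Fb hFb) as [F [hF cF]].
    exists F. split; auto. intros b' hbb'.
    destruct (hpsi b' I E1 hE1) as [Fb' [hFb' hFb'']].
    destruct (c_dense b' (fun a c => F a c /\ Fb' a c)) as [y [hy1 hy2]].
    { apply u_cap; auto. }
    apply hE'. eapply c1; [apply hFbP; eapply cF; eauto|]. apply s1. apply hFb''. auto.
Qed.

End Ext.

Section Roelcke.
Variable X : Type.
Variable lt : rel X.
Hypothesis Hch : is_chain lt.
Hypothesis Hu : ultrahomogeneous lt.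

Lemma sb_refl zs a : same_block lt zs a a.
Proof. intros x _; tauto. Qed.
Lemma sb_sym zs a b : same_block lt zs a b -> same_block lt zs b a.
Proof. intros h x hx; specialize (h x hx); tauto. Qed.
Lemma sb_trans zs a b c : same_block lt zs a b -> same_block lt zs b c -> same_block lt zs a c.
Proof. intros h h' x hx; specialize (h x hx); specialize (h' x hx); tauto. Qed.
Lemma sb_gt zs a b z : same_block lt zs a b -> In z zs -> (lt z a <-> lt z b).
Proof.
  intros h hz. destruct (h z hz) as [e1 e2].
  split; intro hl.
  - destruct (tri X lt Hch z b) as [?|[?|?]]; auto; exfalso.
    + subst. assert (a = b) by (apply e1; auto). subst. eapply lt_irr; eauto.
    + apply e2 in H. eapply lt_asym; eauto.
  - destruct (tri X lt Hch z a) as [?|[?|?]]; auto; exfalso.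
    + subst. assert (b = a) by (apply e1; auto). subst. eapply lt_irr; eauto.
    + apply e2 in H. eapply lt_asym; eauto.
Qed.
Lemma sb_app zs zs' a b : same_block lt (zs ++ zs') a b <-> same_block lt zs a b /\ same_block lt zs' a b.
Proof.
  split.
  - intros h; split; intros x hx; apply h; apply in_or_app; auto.
  - intros [h h'] x hx. apply in_app_or in hx. destruct hx; auto.
Qed.

Lemma sb_app_l zs zs' a b : same_block lt (zs ++ zs') a b -> same_block lt zs a b.
Proof. intros h x hx; apply h; apply in_or_app; auto. Qed.
Lemma sb_app_r zs zs' a b : same_block lt (zs ++ zs') a b -> same_block lt zs' a b.
Proof. intros h x hx; apply h; apply in_or_app; auto. Qed.

Lemma sb_fix zs (o : Aut lt) y : (forall z, In z zs -> ap o z = z) -> same_block lt zs y (ap o y).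
Proof.
  intros ho z hz. split.
  - split; intro e. subst. auto. rewrite <- (ho z hz) in e. apply (ap_inj X lt o) in e. auto.
  - rewrite (ap_lt X lt o y z), (ho z hz). tauto.
Qed.

Definition PBd (xs zs : list X) (g h : Aut lt) : Prop :=
  forall x, In x xs -> same_block lt zs (ap g x) (ap h x).
Definition PB : unif (Aut lt) := fun E => exists xs zs, forall g h, PBd xs zs g h -> E g h.

Lemma PB_unif : is_unif PB.
Proof.
  unfold PB, PBd. split; [|split; [|split; [|split; [|split]]]].
  - exists [], []. auto.
  - intros E F [xs [zs h]] hEF. exists xs, zs. auto.
  - intros E F [xs [zs h]] [xs' [zs' h']]. exists (xs ++ xs'), (zs ++ zs').
    intros g k H. split; [apply h|apply h']; intros x hx.
    + eapply sb_app_l; apply H; apply in_or_app; auto.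
    + eapply sb_app_r; apply H; apply in_or_app; auto.
  - intros E [xs [zs h]] a. apply h. intros; apply sb_refl.
  - intros E [xs [zs h]]. exists xs, zs. intros g k H. apply h. intros; apply sb_sym; auto.
  - intros E [xs [zs h]]. exists (fun g k => PBd xs zs g k). split.
    + exists xs, zs; auto.
    + intros a b c h1 h2. apply h. intros x hx. eapply sb_trans; eauto.
Qed.

Lemma PB_list {I} (l : list I) (Q : I -> Aut lt -> Aut lt -> Prop) :
  (forall i, In i l -> exists xs zs, forall g h, PBd xs zs g h -> Q i g h) ->
  exists xs zs, forall g h, PBd xs zs g h -> forall i, In i l -> Q i g h.
Proof.
  induction l as [|i l IH]; intros H.
  - exists [], []. simpl; tauto.
  - destruct (H i (or_introl eq_refl)) as [xs [zs h]].
    destruct IH as [xs' [zs' h']]. { intros; apply H; simpl; auto. }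
    exists (xs ++ xs'), (zs ++ zs'). intros g k Hd j [<-|hj].
    + apply h. intros x hx. eapply sb_app_l. apply Hd. apply in_or_app; auto.
    + apply h'; auto. intros x hx. eapply sb_app_r. apply Hd. apply in_or_app; auto.
Qed.

Definition St (xs : list X) (o : Aut lt) : Prop := forall x, In x xs -> ap o x = x.

Lemma St_nbhd xs : nbhd_id (perm_top lt) (St xs).
Proof.
  exists (St xs). split; [|split].
  - intros g hg. exists xs. intros h hh x hx. rewrite hh; auto.
  - intros g hg x _; auto.
  - auto.
Qed.

Lemma nbhd_St O : nbhd_id (perm_top lt) O -> exists xs, forall h, St xs h -> O h.
Proof.
  intros [V [hV [hid hVO]]]. destruct (hV (id_aut X lt) (hid (id_aut X lt) (fun x => eq_refl))) as [xs hxs].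
  exists xs. intros h hh. apply hVO. apply hxs. intros x hx. rewrite hh; auto.
Qed.

Lemma roelcke_PB E : roelcke_unif (perm_top lt) E <-> PB E.
Proof.
  split.
  - intros [W [HW [HWL [HWR hE]]]].
    destruct (u_comp _ W HW E hE) as [F [hF cF]].
    destruct (HWL F hF) as [O1 [hO1 h1]]. destruct (HWR F hF) as [O2 [hO2 h2]].
    destruct (nbhd_St O1 hO1) as [xs hxs]. destruct (nbhd_St O2 hO2) as [zs hzs].
    exists xs, zs. intros g h Hd.
    destruct (PIE X lt Hch Hu (map (fun x => (ap g x, ap h x)) xs ++ map (fun z => (z, z)) zs)) as [o ho].
    { intros p q hp hq. apply in_app_or in hp; apply in_app_or in hq.
      destruct hp as [hp|hp]; destruct hq as [hq|hq]; apply in_map_iff in hp; apply in_map_iff in hq;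
        destruct hp as [x [<- hx]]; destruct hq as [y [<- hy]]; simpl.
      - rewrite <- (ap_lt X lt g), <- (ap_lt X lt h). tauto.
      - specialize (Hd x hx y hy). tauto.
      - apply (sb_gt zs); auto.
      - tauto. }
    assert (og : forall x, In x xs -> ap o (ap g x) = ap h x).
    { intros x hx. apply (ho (ap g x, ap h x)). apply in_or_app; left. apply in_map_iff; eauto. }
    assert (oz : forall z, In z zs -> ap o z = z).
    { intros z hz. apply (ho (z, z)). apply in_or_app; right. apply in_map_iff; eauto. }
    set (s := comp_aut X lt (inv_aut X lt g) (comp_aut X lt (inv_aut X lt o) h)).
    apply (cF g (comp_aut X lt g s) h).
    + apply h1. exists s. split; [|intros; reflexivity].
      apply hxs. intros x hx. unfold s, ap; simpl. fold (ap h x) (ap g x).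
      rewrite <- (og x hx). rewrite inv_l, inv_l. auto.
    + apply h2. exists o. split; [apply hzs; exact oz|].
      intros x. unfold s, ap; simpl. fold (ap h x). fold (ap g (inv_fn X lt g (inv_fn X lt o (ap h x)))).
      rewrite inv_r. fold (ap o (inv_fn X lt o (ap h x))). rewrite inv_r. auto.
  - intros hE. exists PB. split; [apply PB_unif|split; [|split]]; auto.
    + intros F [xs [zs hF]]. exists (St xs). split; [apply St_nbhd|].
      intros g h [o [ho e]]. apply hF. intros x hx. rewrite e, ho; auto. apply sb_refl.
    + intros F [xs [zs hF]]. exists (St zs). split; [apply St_nbhd|].
      intros g h [o [ho e]]. apply hF. intros x hx. rewrite e. apply sb_fix; auto.
Qed.

Lemma UXd_unif : is_unif (UXd lt).
Proof.
  unfold UXd. split; [|split; [|split; [|split; [|split]]]].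
  - exists []; auto.
  - intros E F [zs h] hEF. exists zs; auto.
  - intros E F [zs h] [zs' h']. exists (zs ++ zs'). intros a b hab.
    split; [apply h; eapply sb_app_l|apply h'; eapply sb_app_r]; eauto.
  - intros E [zs h] a. apply h, sb_refl.
  - intros E [zs h]. exists zs. intros a b hab. apply h, sb_sym; auto.
  - intros E [zs h]. exists (same_block lt zs). split; [exists zs; auto|].
    intros a b c h1 h2. apply h. eapply sb_trans; eauto.
Qed.

Lemma UG_UXd_PB E : UG lt (UXd lt) E <-> PB E.
Proof.
  split.
  - intros [xs [F [[zs hF] hE]]]. exists xs, zs. intros g h Hd. apply hE.
    exists g. intros x hx. split; apply hF; [apply sb_refl|auto].
  - intros [xs [zs hE]]. exists xs, (same_block lt zs). split; [exists zs; auto|].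
    intros h1 h2 [g hg]. apply hE. intros x hx. destruct (hg x hx).
    eapply sb_trans; [apply sb_sym|]; eauto.
Qed.

Lemma part11 :
  same_unif (roelcke_unif (perm_top lt)) (UG lt (UXd lt)) /\
   forall (Bd : Type) (UBd : unif Bd) (ed : X -> Bd),
     is_completion (UXd lt) UBd ed ->
     completion_is_closure (roelcke_unif (perm_top lt)) (@prod_unif X Bd UBd)
       (fun g x => ed (ap g x)).
Proof.
  split.
  - intros E. rewrite roelcke_PB, UG_UXd_PB. tauto.
  - intros Bd UBd ed Hc. pose proof (c_unif _ _ _ _ _ Hc) as HB.
    split; [apply prod_is_unif; auto|split; [apply prod_separated; apply (c_sep _ _ _ _ _ Hc)|split]].
    + apply prod_complete; auto. apply (c_complete _ _ _ _ _ Hc).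
    + split.
      * intros g h e. apply aut_ext. intros x. apply (c_inj _ _ _ _ _ Hc).
        exact (f_equal (fun f => f x) e).
      * intros E. rewrite roelcke_PB. split.
        -- intros [xs [zs hE]].
           destruct (proj1 (c_emb _ _ _ _ _ Hc (same_block lt zs)) (ex_intro _ zs (fun a b h => h))) as [F0 [hF0 hF0']].
           exists (fun f f' => forall i, In i xs -> F0 (f i) (f' i)). split.
           ++ exists xs, F0. auto.
           ++ intros g h H. apply hE. intros x hx. apply hF0'. auto.
        -- intros [F [[is [F0 [hF0 hF]]] hE]].
           destruct (c_pull _ _ _ _ _ Hc F0 hF0) as [zs hzs].
           exists is, zs. intros g h Hd. apply hE. apply hF. intros i hi. apply hzs. auto.
Qed.

End Roelcke.

Section Intervals.
Variable X : Type.
Variable lt : rel X.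
Hypothesis Hch : is_chain lt.

Definition lo (a : option X) (x : X) : Prop := match a with None => True | Some a => lt a x end.
Definition hi (b : option X) (x : X) : Prop := match b with None => True | Some b => lt x b end.
Definition Iv (a b : option X) (x : X) : Prop := lo a x /\ hi b x.

Lemma Iv_basic a b : order_basic lt (Iv a b).
Proof.
  unfold order_basic, Iv; destruct a as [a|], b as [b|]; simpl.
  - right; right; right. exists a, b. tauto.
  - right; right; left. exists a. tauto.
  - right; left. exists b. tauto.
  - left; tauto.
Qed.

Lemma basic_open V : order_basic lt V -> order_top lt V.
Proof. intros h x hx. exists V; auto. Qed.

Lemma Iv_open a b : order_top lt (Iv a b).
Proof. apply basic_open, Iv_basic. Qed.

Lemma basic_Iv V : order_basic lt V -> exists a b, forall x, V x <-> Iv a b x.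
Proof.
  unfold Iv; intros [h|[[b h]|[[a h]|[a [b h]]]]].
  - exists None, None. simpl. intros x; split; auto.
  - exists None, (Some b). simpl. intros x; rewrite h; tauto.
  - exists (Some a), None. simpl. intros x; rewrite h; tauto.
  - exists (Some a), (Some b). simpl. intros x; rewrite h; tauto.
Qed.

Lemma open_Iv V x : order_top lt V -> V x -> exists a b, Iv a b x /\ forall y, Iv a b y -> V y.
Proof.
  intros hV hx. destruct (hV x hx) as [W [hW [hWx hWV]]].
  destruct (basic_Iv W hW) as [a [b hab]]. exists a, b. split.
  - apply hab; auto.
  - intros y hy. apply hWV, hab; auto.
Qed.

Lemma lo_meet a1 a2 x : lo a1 x -> lo a2 x -> exists a, lo a x /\ forall y, lo a y -> lo a1 y /\ lo a2 y.
Proof.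
  destruct a1 as [a1|], a2 as [a2|]; simpl; intros h1 h2.
  - destruct (tri X lt Hch a1 a2) as [h|[h|h]].
    + exists (Some a2); simpl; split; auto. intros y hy; split; auto. eapply lt_tr; eauto.
    + subst. exists (Some a2); simpl; auto.
    + exists (Some a1); simpl; split; auto. intros y hy; split; auto. eapply lt_tr; eauto.
  - exists (Some a1); simpl; auto.
  - exists (Some a2); simpl; auto.
  - exists None; simpl; auto.
Qed.

Lemma hi_meet b1 b2 x : hi b1 x -> hi b2 x -> exists b, hi b x /\ forall y, hi b y -> hi b1 y /\ hi b2 y.
Proof.
  destruct b1 as [b1|], b2 as [b2|]; simpl; intros h1 h2.
  - destruct (tri X lt Hch b1 b2) as [h|[h|h]].
    + exists (Some b1); simpl; split; auto. intros y hy; split; auto. eapply lt_tr; eauto.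
    + subst. exists (Some b2); simpl; auto.
    + exists (Some b2); simpl; split; auto. intros y hy; split; auto. eapply lt_tr; eauto.
  - exists (Some b1); simpl; auto.
  - exists (Some b2); simpl; auto.
  - exists None; simpl; auto.
Qed.

Lemma Iv_meet a1 b1 a2 b2 x : Iv a1 b1 x -> Iv a2 b2 x ->
  exists a b, Iv a b x /\ forall y, Iv a b y -> Iv a1 b1 y /\ Iv a2 b2 y.
Proof.
  intros [l1 h1] [l2 h2].
  destruct (lo_meet a1 a2 x l1 l2) as [a [ha ha']].
  destruct (hi_meet b1 b2 x h1 h2) as [b [hb hb']].
  exists a, b. split; [split; auto|]. intros y [hy1 hy2].
  destruct (ha' y hy1), (hb' y hy2). split; split; auto.
Qed.

Lemma open_cap A B : order_top lt A -> order_top lt B -> order_top lt (fun x => A x /\ B x).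
Proof.
  intros hA hB x [hx1 hx2].
  destruct (open_Iv A x hA hx1) as [a1 [b1 [i1 s1]]].
  destruct (open_Iv B x hB hx2) as [a2 [b2 [i2 s2]]].
  destruct (Iv_meet a1 b1 a2 b2 x i1 i2) as [a [b [i s]]].
  exists (Iv a b). split; [apply Iv_basic|split; auto].
  intros y hy. destruct (s y hy). split; auto.
Qed.

Lemma open_full : order_top lt (fun _ => True).
Proof. intros x _. exists (fun _ => True). split; [left; auto|auto]. Qed.

Lemma open_list {I} (l : list I) (P : I -> X -> Prop) :
  (forall i, In i l -> order_top lt (P i)) -> order_top lt (fun x => forall i, In i l -> P i x).
Proof.
  induction l as [|i l IH]; intros H.
  - intros x _. exists (fun _ => True). split; [left; auto|simpl; tauto].
  - assert (h := open_cap (P i) (fun x => forall j, In j l -> P j x) (H i (or_introl eq_refl))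
                  (IH (fun j hj => H j (or_intror hj)))).
    intros x hx. destruct (h x) as [V [hV [hVx hVs]]].
    { split; [apply hx; simpl; auto|intros; apply hx; simpl; auto]. }
    exists V. split; auto. split; auto. intros y hy j [<-|hj]; destruct (hVs y hy); auto.
Qed.

Lemma open_lt_r m : order_top lt (fun y => lt y m).
Proof. apply basic_open. right; left. exists m. tauto. Qed.
Lemma open_lt_l m : order_top lt (fun y => lt m y).
Proof. apply basic_open. right; right; left. exists m. tauto. Qed.

Lemma open_imp (P : Prop) A : order_top lt A -> order_top lt (fun x => P -> A x).
Proof.
  intros hA. destruct (classic P) as [p|np].
  - intros x hx. destruct (hA x (hx p)) as [V [h1 [h2 h3]]]. exists V; split; auto.
  - intros x _. exists (fun _ => True). split; [left; auto|split; auto]. tauto.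
Qed.

Lemma open_pre (g : Aut lt) V : order_top lt V -> order_top lt (fun y => V (ap g y)).
Proof.
  intros hV y hy. destruct (open_Iv V (ap g y) hV hy) as [a [b [[la hb] s]]].
  exists (Iv (option_map (inv_fn X lt g) a) (option_map (inv_fn X lt g) b)).
  split; [apply Iv_basic|split].
  - destruct a, b; simpl in *; split; simpl; auto;
      try (apply (ap_lt_inv' X lt g); auto); try (apply (ap_lt_inv X lt g); auto).
  - intros y' [l' h']. apply s. split.
    + destruct a; simpl in *; auto. apply (ap_lt_inv' X lt g); auto.
    + destruct b; simpl in *; auto. apply (ap_lt_inv X lt g); auto.
Qed.

End Intervals.

Section WU.
Variable X : Type.
Variable lt : rel X.
Hypothesis Hch : is_chain lt.
Hypothesis Hu : ultrahomogeneous lt.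

Notation Aut := (Aut lt).
Notation ap := (@ap X lt).
Notation lo := (lo X lt).
Notation hi := (hi X lt).
Notation Iv := (Iv X lt).

Lemma PIE_fun (f : X -> X) (D : list X) :
  (forall u v, In u D -> In v D -> (lt u v <-> lt (f u) (f v))) ->
  exists g : Aut, forall u, In u D -> ap g u = f u.
Proof.
  intros H. destruct (PIE X lt Hch Hu (map (fun u => (u, f u)) D)) as [g hg].
  - intros p q hp hq. apply in_map_iff in hp, hq. destruct hp as [u [<- hu]], hq as [v [<- hv]]. simpl. auto.
  - exists g. intros u hu. apply (hg (u, f u)). apply in_map_iff. eauto.
Qed.

Definition valid (l : list (X * (X -> Prop))) : Prop :=
  forall p, In p l -> order_top lt (snd p) /\ snd p (fst p).
Definition Bas (l : list (X * (X -> Prop))) (o : Aut) : Prop :=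
  forall p, In p l -> snd p (ap o (fst p)).

Lemma valid_app l1 l2 : valid l1 -> valid l2 -> valid (l1 ++ l2).
Proof. intros h1 h2 p hp. apply in_app_or in hp. destruct hp; auto. Qed.
Lemma Bas_app l1 l2 o : Bas l1 o -> Bas l2 o -> Bas (l1 ++ l2) o.
Proof. intros h1 h2 p hp. apply in_app_or in hp. destruct hp; auto. Qed.
Lemma Bas_app_l l1 l2 o : Bas (l1 ++ l2) o -> Bas l1 o.
Proof. intros h p hp. apply h, in_or_app; auto. Qed.
Lemma Bas_app_r l1 l2 o : Bas (l1 ++ l2) o -> Bas l2 o.
Proof. intros h p hp. apply h, in_or_app; auto. Qed.

Lemma Bas_id l o : valid l -> (forall x, ap o x = x) -> Bas l o.
Proof. intros hv ho p hp. rewrite ho. apply hv; auto. Qed.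

Lemma nbhd_Bas O : nbhd_id (ptop lt) O <-> exists l, valid l /\ forall o, Bas l o -> O o.
Proof.
  split.
  - intros [V [hV [hid hVO]]]. destruct (hV (id_aut X lt) (hid (id_aut X lt) (fun x => eq_refl))) as [l [hl1 hl2]].
    exists l. split.
    + intros p hp. destruct (hl1 p hp). auto.
    + intros o ho. apply hVO, hl2. auto.
  - intros [l [hl hO]]. exists (Bas l). split; [|split; [intros; apply Bas_id; auto|auto]].
    intros g hg. exists l. split; [|auto]. intros p hp. split; [apply hl; auto|apply hg; auto].
Qed.

Definition Wp : unif X := fun E => exists O, nbhd_id (ptop lt) O /\ forall (o : Aut) x, O o -> E x (ap o x).

Lemma Wp_Bas E : Wp E <-> exists l, valid l /\ forall o x, Bas l o -> E x (ap o x).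
Proof.
  split.
  - intros [O [hO h]]. apply nbhd_Bas in hO. destruct hO as [l [hl hl']]. exists l; split; auto.
  - intros [l [hl h]]. exists (Bas l). split; auto. apply nbhd_Bas. exists l; auto.
Qed.

Lemma inv_entry z a b : Iv a b z -> exists l', valid l' /\
  forall o, Bas l' o -> Iv a b (inv_fn X lt o z).
Proof.
  intros [ha hb].
  exists ((match a with Some a0 => [(a0, fun y => lt y z)] | None => [] end) ++
          (match b with Some b0 => [(b0, fun y => lt z y)] | None => [] end)).
  split.
  - apply valid_app; [destruct a|destruct b]; simpl in *; intros p hp; try contradiction;
      destruct hp as [<-|[]]; simpl; split; auto; [apply open_lt_r|apply open_lt_l].
  - intros o ho. split.
    + destruct a as [a0|]; simpl; auto. apply (proj1 (ap_lt_inv X lt o a0 z)).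
      apply (Bas_app_l _ _ _ ho (a0, fun y => lt y z)); simpl; auto.
    + destruct b as [b0|]; simpl; auto. apply (proj1 (ap_lt_inv' X lt o b0 z)).
      apply (Bas_app_r _ _ _ ho (b0, fun y => lt z y)). destruct a; simpl; auto.
Qed.

Lemma Bas_inv l : valid l -> exists l', valid l' /\ forall o, Bas l' o -> Bas l (inv_aut X lt o).
Proof.
  induction l as [|p l IH]; intros hv.
  - exists []. split; [intros p []|]. intros o _ p [].
  - destruct IH as [l1 [hl1 h1]]. { intros q hq; apply hv; simpl; auto. }
    destruct (hv p (or_introl eq_refl)) as [hop hp].
    destruct (open_Iv X lt _ _ hop hp) as [a [b [hab s]]].
    destruct (inv_entry _ _ _ hab) as [l2 [hl2 h2]].
    exists (l1 ++ l2). split; [apply valid_app; auto|].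
    intros o ho q [<-|hq].
    + apply s. apply h2. eapply Bas_app_r; eauto.
    + apply h1; auto. eapply Bas_app_l; eauto.
Qed.

Lemma mul_entry z a b : Iv a b z -> exists l', valid l' /\
  forall o1 o2, Bas l' o1 -> Bas l' o2 -> Iv a b (ap o2 (ap o1 z)).
Proof.
  intros [ha hb].
  assert (Ha : exists a' : option X, lo a' z /\ (forall y, lo a' y -> lo a y) /\
             exists l1, valid l1 /\ forall o, Bas l1 o -> forall y, lo a' y -> lo a (ap o y)).
  { destruct a as [a0|]; simpl in *.
    - destruct (dense X lt Hch Hu a0 z ha) as [a1 [h1 h2]].
      exists (Some a1). simpl. split; auto. split; [intros; eapply lt_tr; eauto|].
      exists [(a1, fun y => lt a0 y)]. split.
      + intros p [<-|[]]; simpl; split; auto. apply open_lt_l.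
      + intros o ho y hy. eapply (lt_tr X lt Hch); [apply (ho (a1, fun y => lt a0 y)); simpl; auto|].
        apply ap_lt; auto.
    - exists None. simpl. split; auto. split; auto. exists []. split; [intros p []|auto]. }
  assert (Hb : exists b' : option X, hi b' z /\ (forall y, hi b' y -> hi b y) /\
             exists l1, valid l1 /\ forall o, Bas l1 o -> forall y, hi b' y -> hi b (ap o y)).
  { destruct b as [b0|]; simpl in *.
    - destruct (dense X lt Hch Hu z b0 hb) as [b1 [h1 h2]].
      exists (Some b1). simpl. split; auto. split; [intros; eapply lt_tr; eauto|].
      exists [(b1, fun y => lt y b0)]. split.
      + intros p [<-|[]]; simpl; split; auto. apply open_lt_r.
      + intros o ho y hy. eapply (lt_tr X lt Hch); [|apply (ho (b1, fun y => lt y b0)); simpl; auto].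
        apply ap_lt; auto.
    - exists None. simpl. split; auto. split; auto. exists []. split; [intros p []|auto]. }
  destruct Ha as [a' [ha' [_ [la [hla hla']]]]].
  destruct Hb as [b' [hb' [_ [lb [hlb hlb']]]]].
  exists ([(z, Iv a' b')] ++ la ++ lb). split.
  - apply valid_app; [|apply valid_app; auto]. intros p [<-|[]]; simpl; split; [apply Iv_open|split; auto].
  - intros o1 o2 h1 h2.
    assert (hz : Iv a' b' (ap o1 z)) by (apply (h1 (z, Iv a' b')); simpl; auto).
    destruct hz as [hz1 hz2]. split.
    + apply (hla' o2); auto. eapply Bas_app_l. eapply Bas_app_r with (l1 := [(z, Iv a' b')]). eauto.
    + apply (hlb' o2); auto. eapply Bas_app_r. eapply Bas_app_r with (l1 := [(z, Iv a' b')]). eauto.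
Qed.

Lemma Bas_mul l : valid l -> exists l', valid l' /\ forall o1 o2, Bas l' o1 -> Bas l' o2 ->
  Bas l (comp_aut X lt o2 o1).
Proof.
  induction l as [|p l IH]; intros hv.
  - exists []. split; [intros p []|]. intros o1 o2 _ _ p [].
  - destruct IH as [l1 [hl1 h1]]. { intros q hq; apply hv; simpl; auto. }
    destruct (hv p (or_introl eq_refl)) as [hop hp].
    destruct (open_Iv X lt _ _ hop hp) as [a [b [hab s]]].
    destruct (mul_entry _ _ _ hab) as [l2 [hl2 h2]].
    exists (l1 ++ l2). split; [apply valid_app; auto|].
    intros o1 o2 ho1 ho2 q [<-|hq].
    + apply s. apply h2; eapply Bas_app_r; eauto.
    + apply h1; auto; eapply Bas_app_l; eauto.
Qed.

Lemma Bas_conj (g : Aut) l : valid l -> exists l', valid l' /\ forall o, Bas l' o ->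
  Bas l (comp_aut X lt g (comp_aut X lt o (inv_aut X lt g))).
Proof.
  intros hv. exists (map (fun p => (inv_fn X lt g (fst p), fun y => snd p (ap g y))) l). split.
  - intros q hq. apply in_map_iff in hq. destruct hq as [p [<- hp]]. simpl.
    split; [apply open_pre; auto; apply hv; auto|]. rewrite inv_r. apply hv; auto.
  - intros o ho p hp. apply (ho (inv_fn X lt g (fst p), fun y => snd p (ap g y))).
    apply in_map_iff. eauto.
Qed.

Lemma Wp_unif : is_unif Wp.
Proof.
  split; [|split; [|split; [|split; [|split]]]]; try setoid_rewrite Wp_Bas.
  - exists []. split; [intros p []|auto].
  - intros E F [l [hl h]] hEF. exists l. split; auto.
  - intros E F [l [hl h]] [l' [hl' h']]. exists (l ++ l'). split; [apply valid_app; auto|].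
    intros o x ho. split; [apply h; eapply Bas_app_l|apply h'; eapply Bas_app_r]; eauto.
  - intros E [l [hl h]] a. apply (h (id_aut X lt) a). apply Bas_id; auto.
  - intros E [l [hl h]]. destruct (Bas_inv l hl) as [l' [hl' h']]. exists l'. split; auto.
    intros o x ho. specialize (h (inv_aut X lt o) (ap o x) (h' o ho)).
    unfold ap at 2 in h; simpl in h. fold (ap o x) in h. rewrite inv_l in h. exact h.
  - intros E [l [hl h]]. destruct (Bas_mul l hl) as [l' [hl' h']].
    exists (fun x y => exists o, Bas l' o /\ y = ap o x). split.
    + exists l'. split; auto. intros o x ho. eauto.
    + intros a b c [o1 [h1 ->]] [o2 [h2 ->]]. apply (h (comp_aut X lt o2 o1) a). auto.
Qed.

Lemma Wp_compat A : order_top lt A <-> unif_open Wp A.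
Proof.
  split.
  - intros hA a ha. exists (fun y y' => y = a -> A y'). split.
    + apply Wp_Bas. exists [(a, A)]. split.
      * intros p [<-|[]]; simpl; auto.
      * intros o x ho ->. apply (ho (a, A)); simpl; auto.
    + intros b hb. apply hb; auto.
  - intros hA a ha. destruct (hA a ha) as [E [hE hEA]]. apply Wp_Bas in hE. destruct hE as [l [hl hE]].
    assert (HJ : forall l', (forall p, In p l' -> In p l) -> exists a0 b0, Iv a0 b0 a /\ forall y, Iv a0 b0 y ->
              forall p, In p l' -> (fst p = a -> snd p y) /\ (lt (fst p) a -> lt (fst p) y) /\
                                   (lt a (fst p) -> lt y (fst p))).
    { induction l' as [|p l' IH]; intros hsub.
      - exists None, None. split; [split; simpl; auto|]. intros y _ p [].
      - destruct IH as [a1 [b1 [h1 h1']]]. { intros; apply hsub; simpl; auto. }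
        assert (Hp : exists a2 b2, Iv a2 b2 a /\ forall y, Iv a2 b2 y ->
              (fst p = a -> snd p y) /\ (lt (fst p) a -> lt (fst p) y) /\ (lt a (fst p) -> lt y (fst p))).
        { destruct (hl p (hsub p (or_introl eq_refl))) as [hop hpp].
          destruct (tri X lt Hch (fst p) a) as [h|[h|h]].
          - exists (Some (fst p)), None. split; [split; simpl; auto|].
            intros y [hy _]; simpl in hy. split; [intros e; exfalso; rewrite e in h; eapply lt_irr; eauto|].
            split; auto. intros h'; exfalso; eapply lt_asym; eauto.
          - rewrite h in hpp. destruct (open_Iv X lt _ _ hop hpp) as [a2 [b2 [i2 s2]]].
            exists a2, b2. split; auto. intros y hy. split; [intros; apply s2; auto|].
            split; intros h'; exfalso; rewrite h in h'; eapply lt_irr; eauto.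
          - exists None, (Some (fst p)). split; [split; simpl; auto|].
            intros y [_ hy]; simpl in hy. split; [intros e; exfalso; rewrite e in h; eapply lt_irr; eauto|].
            split; auto. intros h'; exfalso; eapply lt_asym; eauto. }
        destruct Hp as [a2 [b2 [h2 h2']]].
        destruct (Iv_meet X lt Hch _ _ _ _ _ h1 h2) as [a0 [b0 [h0 h0']]].
        exists a0, b0. split; auto. intros y hy q [<-|hq].
        + apply h2'. apply h0'; auto.
        + apply h1'; auto. apply h0'; auto. }
    destruct (HJ l (fun p h => h)) as [a0 [b0 [h0 h0']]].
    exists (Iv a0 b0). split; [apply Iv_basic|split; auto].
    intros y hy.
    set (f := fun u => if excluded_middle_informative (u = a) then y else u).
    destruct (PIE_fun f (a :: map fst l)) as [o ho].
    { assert (fa : f a = y) by (unfold f; destruct excluded_middle_informative; congruence).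
      assert (fz : forall z, z <> a -> f z = z) by (intros z hz; unfold f; destruct excluded_middle_informative; congruence).
      assert (key : forall z, In z (map fst l) -> z <> a -> (lt z a <-> lt z y) /\ (lt a z <-> lt y z)).
      { intros z hz hza. apply in_map_iff in hz. destruct hz as [p [<- hp]].
        destruct (h0' y hy p hp) as [_ [k1 k2]].
        destruct (tri X lt Hch (fst p) a) as [h|[h|h]]; [| contradiction|].
        - pose proof (k1 h) as hy'. split; split; intros h'; auto; exfalso; eapply lt_asym; eauto.
        - pose proof (k2 h) as hy'. split; split; intros h'; auto; exfalso; eapply lt_asym; eauto. }
      intros u v hu hv.
      destruct (classic (u = a)) as [eu|eu]; destruct (classic (v = a)) as [ev|ev].
      - rewrite eu, ev, fa. split; intro h; exfalso; eapply lt_irr; eauto.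
      - rewrite eu, fa, (fz v ev). destruct hv as [hv|hv]; [congruence|]. apply (key v hv ev).
      - rewrite ev, fa, (fz u eu). destruct hu as [hu|hu]; [congruence|]. apply (key u hu eu).
      - rewrite (fz u eu), (fz v ev). tauto. }
    assert (oa : ap o a = y).
    { rewrite (ho a (or_introl eq_refl)). unfold f; destruct excluded_middle_informative; congruence. }
    rewrite <- oa. apply hEA. apply hE.
    intros p hp. rewrite (ho (fst p)) by (right; apply in_map_iff; eauto).
    unfold f; destruct excluded_middle_informative as [e|e].
    + apply (h0' y hy p hp); auto.
    + apply hl; auto.
Qed.

Lemma Wp_equi : is_equiunif lt (order_top lt) (ptop lt) Wp.
Proof.
  split; [apply Wp_unif|split; [apply Wp_compat|split]].
  - intros g E hE. apply Wp_Bas in hE. destruct hE as [l [hl h]].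
    destruct (Bas_conj g l hl) as [l' [hl' h']]. apply Wp_Bas. exists l'. split; auto.
    intros o x ho. specialize (h _ (ap g x) (h' o ho)).
    unfold ap at 2 in h; simpl in h. fold (ap (inv_aut X lt g) (ap g x)) in h.
    unfold ap at 2 in h; simpl in h. rewrite inv_l in h. exact h.
  - intros E [O [hO h]]. exists O. split; auto.
Qed.

Lemma Wp_max : max_equiunif lt (order_top lt) (ptop lt) Wp.
Proof.
  split; [apply Wp_equi|]. intros V [_ [_ [_ hb]]] E hE. destruct (hb E hE) as [O [hO h]].
  exists O. split; auto.
Qed.

Lemma max_is_Wp UXp : max_equiunif lt (order_top lt) (ptop lt) UXp -> same_unif UXp Wp.
Proof.
  intros [hequi hmax] E. split.
  - intros hE. destruct hequi as [_ [_ [_ hb]]]. destruct (hb E hE) as [O [hO h]]. exists O; auto.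
  - apply hmax. apply Wp_equi.
Qed.

End WU.

Section Glue.
Variable X : Type.
Variable lt : rel X.
Hypothesis Hch : is_chain lt.
Hypothesis Hu : ultrahomogeneous lt.

Notation Aut := (Aut lt).
Notation ap := (@ap X lt).
Notation Iv := (Iv X lt).

Definition le (a b : X) := a = b \/ lt a b.
Lemma lt_le_tr a b c : lt a b -> le b c -> lt a c.
Proof. intros h [<-|h']; auto. eapply lt_tr; eauto. Qed.
Lemma le_lt_tr a b c : le a b -> lt b c -> lt a c.
Proof. intros [<-|h] h'; auto. eapply lt_tr; eauto. Qed.
Lemma not_lt_le a b : ~ lt a b -> le b a.
Proof. intros h. destruct (tri X lt Hch a b) as [h'|[h'|h']]; [tauto|left; auto|right; auto]. Qed.

Lemma fmax (D : list X) (P : X -> Prop) (f : X -> X) : (exists u, In u D /\ P u) ->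
  exists m, In m D /\ P m /\ forall u, In u D -> P u -> le (f u) (f m).
Proof.
  induction D as [|d D IH]; intros [u [hu hp]]; [destruct hu|].
  destruct (classic (exists u, In u D /\ P u)) as [ex|nex].
  - destruct (IH ex) as [m [hm [pm hm']]].
    destruct (classic (P d /\ lt (f m) (f d))) as [[pd hd]|nd].
    + exists d. split; [simpl; auto|split; auto]. intros v [<-|hv] pv; [left; auto|].
      right. eapply le_lt_tr; eauto.
    + exists m. split; [simpl; auto|split; auto]. intros v [<-|hv] pv; auto.
      apply not_lt_le. tauto.
  - exists d. destruct hu as [<-|hu]; [|exfalso; eauto].
    split; [simpl; auto|split; auto]. intros v [<-|hv] pv; [left; auto|exfalso; eauto].
Qed.

Lemma fmin (D : list X) (P : X -> Prop) (f : X -> X) : (exists u, In u D /\ P u) ->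
  exists m, In m D /\ P m /\ forall u, In u D -> P u -> le (f m) (f u).
Proof.
  induction D as [|d D IH]; intros [u [hu hp]]; [destruct hu|].
  destruct (classic (exists u, In u D /\ P u)) as [ex|nex].
  - destruct (IH ex) as [m [hm [pm hm']]].
    destruct (classic (P d /\ lt (f d) (f m))) as [[pd hd]|nd].
    + exists d. split; [simpl; auto|split; auto]. intros v [<-|hv] pv; [left; auto|].
      right. eapply lt_le_tr; eauto.
    + exists m. split; [simpl; auto|split; auto]. intros v [<-|hv] pv; auto.
      apply not_lt_le. tauto.
  - exists d. destruct hu as [<-|hu]; [|exfalso; eauto].
    split; [simpl; auto|split; auto]. intros v [<-|hv] pv; [left; auto|exfalso; eauto].
Qed.

Lemma pick_in_K (K : X -> Prop) k0 (D : list X) (f : X -> X) (Pl Ph : X -> Prop) :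
  (forall a b y, K a -> K b -> lt a y -> lt y b -> K y) -> K k0 ->
  (forall u, In u D -> Pl u -> exists k, K k /\ lt (f u) k) ->
  (forall u, In u D -> Ph u -> exists k, K k /\ lt k (f u)) ->
  (forall u v, In u D -> In v D -> Pl u -> Ph v -> lt (f u) (f v)) ->
  exists c, K c /\ (forall u, In u D -> Pl u -> lt (f u) c) /\ (forall u, In u D -> Ph u -> lt c (f u)).
Proof.
  intros Kc K0 Hl Hh Hlh.
  destruct (classic (exists u, In u D /\ Pl u)) as [el|nl];
  destruct (classic (exists u, In u D /\ Ph u)) as [eh|nh].
  - destruct (fmax D Pl f el) as [um [hum [pum mx]]].
    destruct (fmin D Ph f eh) as [vm [hvm [pvm mn]]].
    destruct (Hl um hum pum) as [k1 [K1 h1]]. destruct (Hh vm hvm pvm) as [k2 [K2 h2]].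
    pose proof (Hlh um vm hum hvm pum pvm) as huv.
    destruct (classic (lt k1 (f vm))) as [c1|c1].
    + exists k1. split; auto. split.
      * intros u hu pu. eapply le_lt_tr; eauto.
      * intros v hv pv. eapply lt_le_tr; eauto.
    + destruct (classic (lt (f um) k2)) as [c2|c2].
      * exists k2. split; auto. split.
        -- intros u hu pu. eapply le_lt_tr; eauto.
        -- intros v hv pv. eapply lt_le_tr; eauto.
      * apply not_lt_le in c1, c2.
        destruct (dense X lt Hch Hu _ _ huv) as [c [hc1 hc2]].
        exists c. split; [apply (Kc k2 k1); auto; [eapply le_lt_tr|eapply lt_le_tr]; eauto|].
        split.
        -- intros u hu pu. eapply le_lt_tr; eauto.
        -- intros v hv pv. eapply lt_le_tr; eauto.
  - destruct (fmax D Pl f el) as [um [hum [pum mx]]].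
    destruct (Hl um hum pum) as [k1 [K1 h1]]. exists k1. split; auto. split.
    + intros u hu pu. eapply le_lt_tr; eauto.
    + intros v hv pv. exfalso; eauto.
  - destruct (fmin D Ph f eh) as [vm [hvm [pvm mn]]].
    destruct (Hh vm hvm pvm) as [k2 [K2 h2]]. exists k2. split; auto. split.
    + intros u hu pu. exfalso; eauto.
    + intros v hv pv. eapply lt_le_tr; eauto.
  - exists k0. split; auto. split; intros u hu pu; exfalso; eauto.
Qed.

Lemma Iv_conv a b x y z : Iv a b x -> Iv a b z -> lt x y -> lt y z -> Iv a b y.
Proof.
  intros [l1 h1] [l2 h2] hxy hyz. split.
  - destruct a; simpl in *; auto. eapply (lt_tr X lt Hch); [exact l1|exact hxy].
  - destruct b; simpl in *; auto. eapply (lt_tr X lt Hch); [exact hyz|exact h2].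
Qed.

Lemma glue l : valid X lt l -> exists l', valid X lt l' /\
  forall (D : list X) (f : X -> X),
    (forall u v, In u D -> In v D -> (lt u v <-> lt (f u) (f v))) ->
    (forall u, In u D -> exists o, Bas X lt l' o /\ ap o u = f u) ->
    exists o, Bas X lt l o /\ forall u, In u D -> ap o u = f u.
Proof.
  intros hv. destruct l as [|p0 l0].
  { exists []. split; [intros p []|]. intros D f hord _.
    destruct (PIE_fun X lt Hch Hu f D hord) as [o ho]. exists o. split; auto. intros p []. }
  set (L := p0 :: l0) in *. set (x0 := fst p0).
  destruct (choose_fn (fun ab c => lt (fst ab) (snd ab) -> lt (fst ab) c /\ lt c (snd ab))
              (fun _ => True) x0) as [m hm].
  { intros [a b] _. destruct (classic (lt a b)) as [h|h].
    - destruct (dense X lt Hch Hu a b h) as [c hc]. exists c; auto.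
    - exists a. intros h'; contradiction. }
  destruct (choose_fn (fun p ab => Iv (fst ab) (snd ab) (fst p) /\ forall y, Iv (fst ab) (snd ab) y -> snd p y)
              (fun p => In p L) (None, None)) as [c hc].
  { intros p hp. destruct (hv p hp) as [hop hpp].
    destruct (open_Iv X lt _ _ hop hpp) as [a [b [h1 h2]]]. exists (a, b); auto. }
  set (Z := map fst L).
  set (K := fun z y => (forall p, In p L -> fst p = z -> Iv (fst (c p)) (snd (c p)) y) /\
                   (forall z2, In z2 Z -> lt z z2 -> lt y (m (z, z2))) /\
                   (forall z2, In z2 Z -> lt z2 z -> lt (m (z2, z)) y)).
  assert (Kz : forall z, K z z).
  { intros z. split; [|split].
    - intros p hp <-. apply hc; auto.
    - intros z2 _ h. apply (hm (z, z2) I h).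
    - intros z2 _ h. apply (hm (z2, z) I h). }
  assert (Kconv : forall z a b y, K z a -> K z b -> lt a y -> lt y b -> K z y).
  { intros z a b y [a1 [a2 a3]] [b1 [b2 b3]] hay hyb. split; [|split].
    - intros p hp e. eapply Iv_conv; [apply a1; auto|apply b1; auto|exact hay|exact hyb].
    - intros z2 hz2 h. eapply (lt_tr X lt Hch); [exact hyb|apply b2; auto].
    - intros z2 hz2 h. eapply (lt_tr X lt Hch); [apply a3; auto|exact hay]. }
  assert (Kopen : forall z, order_top lt (K z)).
  { intros z. apply open_cap; auto; [|apply open_cap; auto].
    - apply open_list; auto. intros p hp. apply open_imp. apply Iv_open.
    - apply open_list; auto. intros z2 _. apply open_imp. apply open_lt_r.
    - apply open_list; auto. intros z2 _. apply open_imp. apply open_lt_l. }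
  assert (Kord : forall z1 z2 y1 y2, In z1 Z -> In z2 Z -> lt z1 z2 -> K z1 y1 -> K z2 y2 -> lt y1 y2).
  { intros z1 z2 y1 y2 h1 h2 h [_ [k1 _]] [_ [_ k2]]. eapply (lt_tr X lt Hch); [apply (k1 z2); auto|apply (k2 z1); auto]. }
  assert (Ksub : forall p, In p L -> forall y, K (fst p) y -> snd p y).
  { intros p hp y [k _]. apply hc; auto. }
  exists (map (fun z => (z, K z)) Z). split.
  { intros q hq. apply in_map_iff in hq. destruct hq as [z [<- _]]. simpl. auto. }
  intros D f hord hloc.
  assert (Hc : forall z, In z Z -> exists cz, K z cz /\ forall u, In u D ->
             (lt u z -> lt (f u) cz) /\ (lt z u -> lt cz (f u)) /\ (u = z -> f u = cz)).
  { intros z hz.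
    assert (KL : forall o, Bas X lt (map (fun z => (z, K z)) Z) o -> K z (ap o z)).
    { intros o ho. apply (ho (z, K z)). apply in_map_iff. eauto. }
    destruct (classic (In z D)) as [zD|zD].
    - exists (f z). split.
      + destruct (hloc z zD) as [o [ho e]]. rewrite <- e. auto.
      + intros u hu. split; [|split].
        * intros h. apply (proj1 (hord u z hu zD)); auto.
        * intros h. apply (proj1 (hord z u zD hu)); auto.
        * intros ->; auto.
    - destruct (pick_in_K (K z) z D f (fun u => lt u z) (fun u => lt z u)) as [cz [hcz [h1 h2]]].
      + intros a b y ha hb h h'. exact (Kconv z a b y ha hb h h').
      + auto.
      + intros u hu h. destruct (hloc u hu) as [o [ho e]]. exists (ap o z). split; auto.
        rewrite <- e. apply ap_lt; auto.
      + intros u hu h. destruct (hloc u hu) as [o [ho e]]. exists (ap o z). split; auto.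
        rewrite <- e. apply ap_lt; auto.
      + intros u v hu hv2 h h'. apply (proj1 (hord u v hu hv2)). eapply (lt_tr X lt Hch); [exact h|exact h'].
      + exists cz. split; auto. intros u hu. split; [|split]; auto. intros ->; contradiction. }
  destruct (choose_fn (fun z cz => K z cz /\ forall u, In u D ->
             (lt u z -> lt (f u) cz) /\ (lt z u -> lt cz (f u)) /\ (u = z -> f u = cz))
             (fun z => In z Z) x0 Hc) as [cf hcf].
  set (F := fun u => if excluded_middle_informative (In u D) then f u else cf u).
  assert (FD : forall u, In u D -> F u = f u).
  { intros u hu; unfold F; destruct excluded_middle_informative; tauto. }
  assert (FZ : forall z, In z Z -> F z = cf z).
  { intros z hz; unfold F; destruct excluded_middle_informative as [i|i]; auto.
    apply (proj2 (proj2 (proj2 (hcf z hz) z i))); auto. }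
  assert (DZ : forall u z, In u D -> In z Z -> (lt u z <-> lt (f u) (cf z)) /\ (lt z u <-> lt (cf z) (f u))).
  { intros u z hu hz. destruct (proj2 (hcf z hz) u hu) as [k1 [k2 k3]].
    split; split; auto; intros h.
    - destruct (tri X lt Hch u z) as [h'|[h'|h']]; auto; exfalso.
      + rewrite (k3 h') in h. eapply lt_irr; eauto.
      + exact (lt_asym X lt Hch _ _ h (k2 h')).
    - destruct (tri X lt Hch z u) as [h'|[h'|h']]; auto; exfalso.
      + rewrite (k3 (eq_sym h')) in h. eapply lt_irr; eauto.
      + exact (lt_asym X lt Hch _ _ h (k1 h')). }
  assert (ZZ : forall z1 z2, In z1 Z -> In z2 Z -> (lt z1 z2 <-> lt (cf z1) (cf z2))).
  { intros z1 z2 h1 h2. split; intros h.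
    - apply (Kord z1 z2); auto; apply hcf; auto.
    - destruct (tri X lt Hch z1 z2) as [h'|[h'|h']]; auto; exfalso.
      + subst. eapply lt_irr; eauto.
      + eapply (lt_asym X lt Hch); [exact h|]. apply (Kord z2 z1); auto; apply hcf; auto. }
  destruct (PIE_fun X lt Hch Hu F (D ++ Z)) as [o ho].
  { intros u v hu hv2. apply in_app_or in hu, hv2.
    destruct hu as [hu|hu]; destruct hv2 as [hv2|hv2].
    - rewrite !FD; auto.
    - rewrite FD, FZ; auto. apply DZ; auto.
    - rewrite FZ, FD; auto. apply DZ; auto.
    - rewrite !FZ; auto. }
  exists o. split.
  - intros p hp. rewrite ho by (apply in_or_app; right; apply in_map_iff; eauto).
    rewrite FZ by (apply in_map_iff; eauto). apply Ksub; auto. apply hcf. apply in_map_iff; eauto.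
  - intros u hu. rewrite ho by (apply in_or_app; auto). apply FD; auto.
Qed.

End Glue.

Section P12.
Variable X : Type.
Variable lt : rel X.
Hypothesis Hch : is_chain lt.
Hypothesis Hu : ultrahomogeneous lt.

Notation Aut := (Aut lt).
Notation ap := (@ap X lt).

Definition PBV (V : unif X) : unif Aut := fun E => exists xs F, V F /\
  forall g h : Aut, (forall x, In x xs -> F (ap g x) (ap h x)) -> E g h.

Lemma UG_PBV V E : is_unif V -> (UG lt V E <-> PBV V E).
Proof.
  intros HV. split.
  - intros [xs [F [hF hE]]]. exists xs, F. split; auto. intros g h H. apply hE.
    exists g. intros x hx. split; [apply (u_refl _ V HV); auto|auto].
  - intros [xs [F [hF hE]]]. destruct (sym_half _ V HV F hF) as [F1 [hF1 [s1 c1]]].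
    exists xs, F1. split; auto. intros h1 h2 [g hg]. apply hE. intros x hx.
    destruct (hg x hx) as [a b]. eapply c1; [apply s1; exact a|exact b].
Qed.

Lemma PBV_same V V' E : same_unif V V' -> PBV V E -> PBV V' E.
Proof. intros hs [xs [F [hF hE]]]. exists xs, F. split; auto. apply hs; auto. Qed.

Lemma RK_PBW E : RK lt E <-> PBV (Wp X lt) E.
Proof.
  split.
  - intros [O [xs [hO hE]]]. apply (nbhd_Bas X lt) in hO. destruct hO as [l [hl hlO]].
    destruct (glue X lt Hch Hu l hl) as [l' [hl' hg]].
    exists xs, (fun y y' => exists o, Bas X lt l' o /\ y' = ap o y). split.
    { apply (Wp_Bas X lt). exists l'. split; auto. intros o x ho. eauto. }
    intros h1 h2 H.
    destruct (hg (map (ap h1) xs) (fun u => ap h2 (inv_fn X lt h1 u))) as [o [ho ho']].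
    + intros u v hu hv. apply in_map_iff in hu, hv. destruct hu as [x [<- _]], hv as [y [<- _]].
      rewrite !inv_l. rewrite <- (ap_lt X lt h1), <- (ap_lt X lt h2). tauto.
    + intros u hu. apply in_map_iff in hu. destruct hu as [x [<- hx]].
      destruct (H x hx) as [o [ho e]]. exists o. split; auto. rewrite inv_l. auto.
    + apply hE. exists h1. split.
      * exists (id_aut X lt), (id_aut X lt). split; [apply hlO; apply Bas_id; auto|split; auto].
      * exists o, (comp_aut X lt (inv_aut X lt h1) (comp_aut X lt (inv_aut X lt o) h2)).
        split; [apply hlO; auto|split].
        -- intros x hx. unfold ap; simpl. fold (ap h2 x).
           specialize (ho' (ap h1 x) ltac:(apply in_map_iff; eauto)). rewrite inv_l in ho'.
           rewrite <- ho'. fold (ap o (ap h1 x)). rewrite inv_l, inv_l. auto.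
        -- intros x. unfold ap at 2; simpl. fold (ap h2 x).
           fold (ap h1 (inv_fn X lt h1 (inv_fn X lt o (ap h2 x)))). rewrite inv_r.
           fold (ap o (inv_fn X lt o (ap h2 x))). rewrite inv_r. auto.
  - intros [xs [F [hF hE]]].
    destruct (sym_half _ _ (Wp_unif X lt Hch Hu) F hF) as [F1 [hF1 [s1 c1]]].
    apply (Wp_Bas X lt) in hF1. destruct hF1 as [l1 [hl1 h1]].
    exists (Bas X lt l1), xs. split; [apply (nbhd_Bas X lt); exists l1; auto|].
    intros k1 k2 [g [[o1 [t1 [ho1 [ht1 e1]]]] [o2 [t2 [ho2 [ht2 e2]]]]]].
    apply hE. intros x hx. rewrite e1, e2, ht1, ht2; auto.
    eapply c1; [apply s1; apply h1; auto|apply h1; auto].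
Qed.

Lemma part12 :
  (exists UXp, max_equiunif lt (order_top lt) (ptop lt) UXp) /\
   forall UXp, max_equiunif lt (order_top lt) (ptop lt) UXp ->
     same_unif (RK lt) (UG lt UXp) /\
     forall (Bp : Type) (UBp : unif Bp) (ep : X -> Bp),
       is_completion UXp UBp ep ->
       completion_is_closure (RK lt) (@prod_unif X Bp UBp) (fun g x => ep (ap g x)).
Proof.
  split; [exists (Wp X lt); apply Wp_max; auto|].
  intros UXp hmax. pose proof (max_is_Wp X lt Hch Hu UXp hmax) as hs.
  assert (hsym : same_unif (Wp X lt) UXp) by (intros E; split; intro h; apply (hs E); auto).
  assert (HV : is_unif UXp) by apply hmax.
  assert (RKe : forall E, RK lt E <-> PBV UXp E).
  { intros E. rewrite RK_PBW. split; apply PBV_same; auto. }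
  split.
  - intros E. rewrite RKe, UG_PBV; auto. tauto.
  - intros Bp UBp ep Hc. pose proof (c_unif _ _ _ _ _ Hc) as HB.
    split; [apply prod_is_unif; auto|split; [apply prod_separated; apply (c_sep _ _ _ _ _ Hc)|split]].
    + apply prod_complete; auto. apply (c_complete _ _ _ _ _ Hc).
    + split.
      * intros g h e. apply aut_ext. intros x. apply (c_inj _ _ _ _ _ Hc).
        exact (f_equal (fun f => f x) e).
      * intros E. rewrite RKe. split.
        -- intros [xs [F [hF hE]]].
           destruct (proj1 (c_emb _ _ _ _ _ Hc F) hF) as [F0 [hF0 hF0']].
           exists (fun f f' => forall i, In i xs -> F0 (f i) (f' i)). split.
           ++ exists xs, F0. auto.
           ++ intros g h H. apply hE. intros x hx. apply hF0'. auto.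
        -- intros [F [[is [F0 [hF0 hF]]] hE]].
           exists is, (fun a b => F0 (ep a) (ep b)). split; [apply (c_pull _ _ _ _ _ Hc); auto|].
           intros g h Hd. apply hE. apply hF. auto.
Qed.

End P12.

Section Lim.
Variable X : Type.
Variable lt : rel X.
Hypothesis Hch : is_chain lt.
Variable x0 : X.
Hypothesis Hdense : forall x y, lt x y -> exists c, lt x c /\ lt c y.
Hypothesis Hnomax : forall x, exists y, lt x y.
Hypothesis Hnomin : forall x, exists y, lt y x.

Variable B : Type.
Variable U : unif X.
Variable UB : unif B.
Variable e : X -> B.
Hypothesis Hc : is_completion U UB e.
Hypothesis H1 : forall F, U F -> exists Z, forall a b, same_block lt Z a b -> F a b.

Notation lo := (lo X lt).
Notation hi := (hi X lt).

Definition lep (z : X) (p : option X) : Prop := match p with None => False | Some x => z = x \/ lt z x end.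
Definition gep (z : X) (p : option X) : Prop := match p with None => False | Some x => z = x \/ lt x z end.

Definition rlim (p : option X) (b : B) : Prop :=
  forall F, UB F -> exists u, lo p u /\ forall y, lo p y -> lt y u -> F b (e y).
Definition llim (q : option X) (b : B) : Prop :=
  forall F, UB F -> exists u, hi q u /\ forall y, lt u y -> hi q y -> F b (e y).

Lemma lep_lo z p t : lep z p -> lo p t -> lt z t.
Proof. destruct p as [x|]; simpl; [|tauto]. intros [<-|h] h'; auto. eapply lt_tr; eauto. Qed.
Lemma gep_hi z p t : gep z p -> hi p t -> lt t z.
Proof. destruct p as [x|]; simpl; [|tauto]. intros [<-|h] h'; auto. eapply lt_tr; eauto. Qed.

Lemma pick_r p u v : lo p u -> lo p v -> exists t, lo p t /\ lt t u /\ lt t v.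
Proof.
  intros hu hv.
  assert (exists w, lo p w /\ (w = u \/ lt w u) /\ (w = v \/ lt w v)) as [w [hw [h1 h2]]].
  { destruct (tri X lt Hch u v) as [h|[h|h]].
    - exists u; auto. - subst; exists v; auto. - exists v; auto. }
  destruct p as [x|]; simpl in *.
  - destruct (Hdense x w hw) as [t [ht1 ht2]]. exists t. split; auto.
    split; [destruct h1 as [<-|h1]|destruct h2 as [<-|h2]]; auto; eapply lt_tr; eauto.
  - destruct (Hnomin w) as [t ht]. exists t. split; auto.
    split; [destruct h1 as [<-|h1]|destruct h2 as [<-|h2]]; auto; eapply lt_tr; eauto.
Qed.

Lemma pick_l q u v : hi q u -> hi q v -> exists t, hi q t /\ lt u t /\ lt v t.
Proof.
  intros hu hv.
  assert (exists w, hi q w /\ (w = u \/ lt u w) /\ (w = v \/ lt v w)) as [w [hw [h1 h2]]].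
  { destruct (tri X lt Hch u v) as [h|[h|h]].
    - exists v; auto. - subst; exists v; auto. - exists u; auto. }
  destruct q as [x|]; simpl in *.
  - destruct (Hdense w x hw) as [t [ht1 ht2]]. exists t. split; auto.
    split; [destruct h1 as [<-|h1]|destruct h2 as [<-|h2]]; auto; eapply lt_tr; eauto.
  - destruct (Hnomax w) as [t ht]. exists t. split; auto.
    split; [destruct h1 as [<-|h1]|destruct h2 as [<-|h2]]; auto; eapply lt_tr; eauto.
Qed.

Lemma zfree_r p Z : exists v, lo p v /\ forall z, In z Z -> lep z p \/ v = z \/ lt v z.
Proof.
  induction Z as [|z Z IH].
  - destruct p as [x|]; simpl.
    + destruct (Hnomax x) as [v hv]. exists v; split; [auto|intros z []].
    + exists x0. split; [simpl; auto|intros z []].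
  - destruct IH as [v [hv H]].
    destruct (classic (lep z p)) as [hz|hz].
    + exists v. split; auto. intros z' [<-|h]; auto.
    + destruct (classic (lt z v)) as [hzv|hzv].
      * exists z. split.
        -- destruct p as [x|]; simpl in *; auto.
           destruct (tri X lt Hch x z) as [h|[h|h]]; auto; exfalso; apply hz; auto.
        -- intros z' [<-|h]; auto. destruct (H z' h) as [h'|[<-|h']]; auto.
           right; right. eapply lt_tr; eauto.
      * exists v. split; auto. intros z' [<-|h]; auto.
        destruct (tri X lt Hch z v) as [h'|[h'|h']]; [contradiction|auto|auto].
Qed.

Lemma zfree_l q Z : exists v, hi q v /\ forall z, In z Z -> gep z q \/ v = z \/ lt z v.
Proof.
  induction Z as [|z Z IH].
  - destruct q as [x|]; simpl.
    + destruct (Hnomin x) as [v hv]. exists v; split; [auto|intros z []].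
    + exists x0. split; [simpl; auto|intros z []].
  - destruct IH as [v [hv H]].
    destruct (classic (gep z q)) as [hz|hz].
    + exists v. split; auto. intros z' [<-|h]; auto.
    + destruct (classic (lt v z)) as [hzv|hzv].
      * exists z. split.
        -- destruct q as [x|]; simpl in *; auto.
           destruct (tri X lt Hch x z) as [h|[h|h]]; auto; exfalso; apply hz; auto.
        -- intros z' [<-|h]; auto. destruct (H z' h) as [h'|[<-|h']]; auto.
           right; right. eapply lt_tr; eauto.
      * exists v. split; auto. intros z' [<-|h]; auto.
        destruct (tri X lt Hch z v) as [h'|[h'|h']]; [auto|auto|contradiction].
Qed.

Lemma rlim_close F : UB F -> exists Z, forall p p' b b',
  (forall z, In z Z -> (lep z p <-> lep z p')) -> rlim p b -> rlim p' b' -> F b b'.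
Proof.
  intros hF. pose proof (c_unif _ _ _ _ _ Hc) as HB.
  destruct (third _ _ HB F hF) as [F1 [hF1 [s1 c1]]].
  destruct (H1 _ (c_pull _ _ _ _ _ Hc F1 hF1)) as [Z hZ].
  exists Z. intros p p' b b' hpp' hb hb'.
  destruct (hb F1 hF1) as [u [hu hu']]. destruct (hb' F1 hF1) as [u' [hu2 hu2']].
  destruct (zfree_r p Z) as [v [hv hv']]. destruct (zfree_r p' Z) as [v' [hv2 hv2']].
  destruct (pick_r p u v hu hv) as [t [ht [ht1 ht2]]].
  destruct (pick_r p' u' v' hu2 hv2) as [t' [ht' [ht1' ht2']]].
  apply (c1 b (e t) (e t') b'); [apply hu'; auto| |apply s1; apply hu2'; auto].
  apply hZ. intros z hz.
  destruct (classic (lep z p)) as [hl|hl].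
  - pose proof (lep_lo _ _ _ hl ht). pose proof (lep_lo _ _ _ (proj1 (hpp' z hz) hl) ht').
    split; split; intros h; try (exfalso; subst; eapply lt_irr; eauto; fail);
      exfalso; eapply lt_asym; eauto.
  - assert (hl' : ~ lep z p') by (rewrite <- hpp'; auto).
    assert (a1 : lt t z) by (destruct (hv' z hz) as [?|[<-|?]]; [contradiction|auto|eapply lt_tr; eauto]).
    assert (a2 : lt t' z) by (destruct (hv2' z hz) as [?|[<-|?]]; [contradiction|auto|eapply lt_tr; eauto]).
    split; split; intros h; auto; exfalso; subst; eapply lt_irr; eauto.
Qed.

Lemma llim_close F : UB F -> exists Z, forall q q' b b',
  (forall z, In z Z -> (gep z q <-> gep z q')) -> llim q b -> llim q' b' -> F b b'.
Proof.
  intros hF. pose proof (c_unif _ _ _ _ _ Hc) as HB.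
  destruct (third _ _ HB F hF) as [F1 [hF1 [s1 c1]]].
  destruct (H1 _ (c_pull _ _ _ _ _ Hc F1 hF1)) as [Z hZ].
  exists Z. intros p p' b b' hpp' hb hb'.
  destruct (hb F1 hF1) as [u [hu hu']]. destruct (hb' F1 hF1) as [u' [hu2 hu2']].
  destruct (zfree_l p Z) as [v [hv hv']]. destruct (zfree_l p' Z) as [v' [hv2 hv2']].
  destruct (pick_l p u v hu hv) as [t [ht [ht1 ht2]]].
  destruct (pick_l p' u' v' hu2 hv2) as [t' [ht' [ht1' ht2']]].
  apply (c1 b (e t) (e t') b'); [apply hu'; auto| |apply s1; apply hu2'; auto].
  apply hZ. intros z hz.
  destruct (classic (gep z p)) as [hl|hl].
  - pose proof (gep_hi _ _ _ hl ht). pose proof (gep_hi _ _ _ (proj1 (hpp' z hz) hl) ht').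
    split; split; intros h; auto; exfalso; subst; eapply lt_irr; eauto.
  - assert (hl' : ~ gep z p') by (rewrite <- hpp'; auto).
    assert (a1 : lt z t) by (destruct (hv' z hz) as [?|[<-|?]]; [contradiction|auto|eapply lt_tr; eauto]).
    assert (a2 : lt z t') by (destruct (hv2' z hz) as [?|[<-|?]]; [contradiction|auto|eapply lt_tr; eauto]).
    split; split; intros h; try (exfalso; subst; eapply lt_irr; eauto; fail);
      exfalso; eapply lt_asym; eauto.
Qed.

Lemma rlim_transfer (phi : X -> X) (psi : B -> B) p b :
  (forall x y, lt x y <-> lt (phi x) (phi y)) -> (forall y, exists x, phi x = y) ->
  (forall x, psi (e x) = e (phi x)) ->
  (forall A, unif_open UB A -> unif_open UB (fun b => A (psi b))) ->
  rlim p b -> rlim (option_map phi p) (psi b).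
Proof.
  intros Hmon Hsur He Hcont hb F hF.
  destruct (cont_nbhd _ _ (c_unif _ _ _ _ _ Hc) psi Hcont b F hF) as [F' [hF' h']].
  destruct (hb F' hF') as [u [hu hu']]. exists (phi u). split.
  - destruct p; simpl in *; auto. apply (proj1 (Hmon _ _)); auto.
  - intros y hy hyu. destruct (Hsur y) as [y0 <-]. rewrite <- He. apply h'. apply hu'.
    + destruct p; simpl in *; auto. apply (proj2 (Hmon _ _)); auto.
    + apply (proj2 (Hmon _ _)); auto.
Qed.

Lemma llim_transfer (phi : X -> X) (psi : B -> B) p b :
  (forall x y, lt x y <-> lt (phi x) (phi y)) -> (forall y, exists x, phi x = y) ->
  (forall x, psi (e x) = e (phi x)) ->
  (forall A, unif_open UB A -> unif_open UB (fun b => A (psi b))) ->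
  llim p b -> llim (option_map phi p) (psi b).
Proof.
  intros Hmon Hsur He Hcont hb F hF.
  destruct (cont_nbhd _ _ (c_unif _ _ _ _ _ Hc) psi Hcont b F hF) as [F' [hF' h']].
  destruct (hb F' hF') as [u [hu hu']]. exists (phi u). split.
  - destruct p; simpl in *; auto. apply (proj1 (Hmon _ _)); auto.
  - intros y hyu hy. destruct (Hsur y) as [y0 <-]. rewrite <- He. apply h'. apply hu'.
    + apply (proj2 (Hmon _ _)); auto.
    + destruct p; simpl in *; auto. apply (proj2 (Hmon _ _)); auto.
Qed.

Lemma sb_of Z t y : (forall z, In z Z -> (lt t z /\ lt y z) \/ (lt z t /\ lt z y)) -> same_block lt Z t y.
Proof.
  intros H z hz. destruct (H z hz) as [[h1 h2]|[h1 h2]].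
  - split; split; intros h; auto; exfalso; subst; eapply lt_irr; eauto.
  - split; split; intros h; try (exfalso; subst; eapply lt_irr; eauto; fail);
      exfalso; eapply lt_asym; eauto.
Qed.

Lemma le_lt_tr' a b c : (a = b \/ lt a b) -> lt b c -> lt a c.
Proof. intros [<-|h] h'; auto. eapply lt_tr; eauto. Qed.
Lemma lt_le_tr' a b c : lt a b -> (b = c \/ lt b c) -> lt a c.
Proof. intros h [<-|h']; auto. eapply lt_tr; eauto. Qed.
Lemma nlt_le a b : ~ lt a b -> b = a \/ lt b a.
Proof. intros h. destruct (tri X lt Hch a b) as [?|[?|?]]; auto; contradiction. Qed.

Hypothesis Hcont : continuous_chain lt.

Lemma classify b : (exists x, b = e x) \/ (exists m, rlim (Some m) b) \/ (exists m, llim (Some m) b) \/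
  rlim None b \/ llim None b.
Proof.
  pose proof (c_unif _ _ _ _ _ Hc) as HB.
  set (Tb := fun A : X -> Prop => exists F, UB F /\ forall y, F b (e y) -> A y).
  assert (Tb_up : forall A A', Tb A -> (forall y, A y -> A' y) -> Tb A').
  { intros A A' [F [hF h]] h'. exists F; split; auto. }
  assert (Tb_cap : forall A A', Tb A -> Tb A' -> Tb (fun y => A y /\ A' y)).
  { intros A A' [F [hF h]] [F' [hF' h']]. exists (fun a c => F a c /\ F' a c).
    split; [apply u_cap; auto|]. intros y [? ?]; auto. }
  assert (Tb_ne : forall A, Tb A -> exists y, A y).
  { intros A [F [hF h]]. destruct (c_dense _ _ _ _ _ Hc b F hF) as [y hy]. eauto. }
  set (As := fun y => Tb (fun t => lt y t)).
  assert (wit : forall w S, ~ As w -> Tb S -> exists t, S t /\ ~ lt w t).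
  { intros w S hw hS. apply NNPP. intros hn. apply hw. eapply Tb_up; [exact hS|].
    intros t ht. apply NNPP. intros h'. apply hn. eauto. }
  assert (prep : forall F, UB F -> exists F1, UB F1 /\ exists Z, forall t y,
             F1 b (e t) -> same_block lt Z t y -> F b (e y)).
  { intros F hF. destruct (sym_half _ _ HB F hF) as [F1 [hF1 [s1 c1]]].
    destruct (H1 _ (c_pull _ _ _ _ _ Hc F1 hF1)) as [Z hZ].
    exists F1. split; auto. exists Z. intros t y h1 h2. eapply c1; [exact h1|]. apply hZ; auto. }
  assert (hS : forall F1, UB F1 -> Tb (fun t => F1 b (e t))).
  { intros F1 h. exists F1. split; auto. }
  destruct (classic (exists a, As a)) as [[a ha]|na].
  - destruct (classic (exists c, ~ As c)) as [[c hc]|nc].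
    + destruct (Hcont As (fun y => ~ As y)) as [[m [hm hm']]|[m [hm hm']]].
      * exists a; auto.
      * exists c; auto.
      * intros x. apply classic.
      * intros a' c' ha' hc'. destruct (tri X lt Hch a' c') as [?|[?|?]]; auto; exfalso; apply hc'.
        -- subst; auto.
        -- eapply Tb_up; [exact ha'|]. intros t ht. eapply lt_tr; eauto.
      * right; left. exists m. intros F hF.
        destruct (prep F hF) as [F1 [hF1 [Z hZ]]].
        destruct (zfree_r (Some m) Z) as [v [hv hv']]. simpl in hv.
        destruct (Hdense m v hv) as [w [hw1 hw2]].
        assert (nw : ~ As w).
        { intros h. destruct (hm' w h) as [e'|e']; [subst; eapply lt_irr; eauto|eapply lt_asym; eauto]. }
        destruct (wit w _ nw (Tb_cap _ _ (hS F1 hF1) hm)) as [t [[ht1 ht2] ht3]].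
        apply nlt_le in ht3.
        exists v. split; [simpl; auto|]. intros y hy hyv. simpl in hy. apply (hZ t y ht1).
        apply sb_of. intros z hz. destruct (hv' z hz) as [h|h].
        -- right. simpl in h. split; eapply le_lt_tr'; eauto.
        -- left. split; eapply lt_le_tr'; eauto. eapply le_lt_tr'; eauto.
      * assert (below : forall y, lt y m -> As y).
        { intros y hy. apply NNPP. intros h. destruct (hm' y h) as [e'|e'];
            [subst; eapply lt_irr; eauto|eapply lt_asym; eauto]. }
        destruct (classic (exists F0, UB F0 /\ exists y0, lt y0 m /\
                    forall t, lt y0 t -> lt t m -> ~ F0 b (e t))) as [[F0 [hF0 [y0 [hy0 hy0']]]]|nF].
        -- left. exists m. apply (c_sep _ _ _ _ _ Hc). intros F hF.
           destruct (wit m _ hm (Tb_cap _ _ (hS (fun a c => F a c /\ F0 a c) (u_cap _ _ HB _ _ hF hF0)) (below y0 hy0)))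
             as [t [[[ht1 ht2] ht3] ht4]].
           apply nlt_le in ht4. destruct ht4 as [<-|ht4]; auto. exfalso. eapply hy0'; eauto.
        -- right; right; left. exists m. intros F hF.
           destruct (prep F hF) as [F1 [hF1 [Z hZ]]].
           destruct (zfree_l (Some m) Z) as [v [hv hv']]. simpl in hv.
           assert (ht : exists t, lt v t /\ lt t m /\ F1 b (e t)).
           { apply NNPP. intros hn. apply nF. exists F1. split; auto. exists v. split; auto.
             intros t h1 h2 h3. apply hn. eauto. }
           destruct ht as [t [ht1 [ht2 ht3]]].
           exists v. split; [simpl; auto|]. intros y hyv hy. simpl in hy. apply (hZ t y ht3).
           apply sb_of. intros z hz. destruct (hv' z hz) as [h|h].
           ++ left. simpl in h. split; eapply lt_le_tr'; eauto; destruct h as [<-|h]; auto.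
           ++ right. destruct h as [<-|h]; split; auto; eapply (lt_tr X lt Hch); eauto.
    + right; right; right; right. intros F hF.
      destruct (prep F hF) as [F1 [hF1 [Z hZ]]].
      destruct (zfree_l None Z) as [v [_ hv']].
      assert (hAv : As v) by (apply NNPP; intros h; apply nc; eauto).
      destruct (Tb_ne _ (Tb_cap _ _ (hS F1 hF1) hAv)) as [t [ht1 ht2]].
      exists v. split; [simpl; auto|]. intros y hyv _. apply (hZ t y ht1).
      apply sb_of. intros z hz. destruct (hv' z hz) as [[]|h].
      right. destruct h as [<-|h]; split; auto; eapply (lt_tr X lt Hch); eauto.
  - right; right; right; left. intros F hF.
    destruct (prep F hF) as [F1 [hF1 [Z hZ]]].
    destruct (zfree_r None Z) as [v [_ hv']].
    destruct (Hnomin v) as [w hw].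
    assert (nw : ~ As w) by (intros h; apply na; eauto).
    destruct (wit w _ nw (hS F1 hF1)) as [t [ht1 ht2]]. apply nlt_le in ht2.
    exists v. split; [simpl; auto|]. intros y _ hyv. apply (hZ t y ht1).
    apply sb_of. intros z hz. destruct (hv' z hz) as [[]|h].
    left. split; [eapply le_lt_tr'; [exact ht2|]|]; eapply lt_le_tr'; eauto.
Qed.

End Lim.

Section P2.
Variable X : Type.
Variable lt : rel X.
Hypothesis Hch : is_chain lt.
Hypothesis Hu : ultrahomogeneous lt.

Notation Aut := (Aut lt).
Notation ap := (@ap X lt).

Lemma UXd_sat (g : Aut) E : UXd lt E -> UXd lt (fun x y => E (ap g x) (ap g y)).
Proof.
  intros [zs h]. exists (map (inv_fn X lt g) zs). intros a b hab. apply h.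
  intros z hz. assert (hz' : In (inv_fn X lt g z) (map (inv_fn X lt g) zs)) by (apply in_map; auto).
  destruct (hab _ hz') as [e1 e2]. split.
  - split; intros e.
    + assert (ha : a = inv_fn X lt g z) by (rewrite <- e, inv_l; auto). apply e1 in ha. rewrite ha. apply inv_r.
    + assert (hb : b = inv_fn X lt g z) by (rewrite <- e, inv_l; auto). apply e1 in hb. rewrite hb. apply inv_r.
  - rewrite !(ap_lt_inv X lt g). auto.
Qed.

Lemma Wp_H1 F : Wp X lt F -> exists Z, forall a b, same_block lt Z a b -> F a b.
Proof.
  intros hF. apply (Wp_Bas X lt) in hF. destruct hF as [l [hl hF]].
  exists (map fst l). intros a b hab.
  set (f := fun u => if excluded_middle_informative (u = a) then b else u).
  assert (fa : f a = b) by (unfold f; destruct excluded_middle_informative; congruence).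
  assert (fz : forall z, In z (map fst l) -> f z = z).
  { intros z hz; unfold f; destruct excluded_middle_informative as [e|e]; auto.
    rewrite e in hz |- *. apply (proj1 (proj1 (hab a hz)) eq_refl). }
  destruct (PIE_fun X lt Hch Hu f (a :: map fst l)) as [o ho].
  { intros u v [<-|hu] [<-|hv].
    - rewrite fa. split; intro h; exfalso; eapply lt_irr; eauto.
    - rewrite fa, (fz v hv). apply (hab v hv).
    - rewrite fa, (fz u hu). apply (sb_gt X lt Hch (map fst l) a b u hab hu).
    - rewrite (fz u hu), (fz v hv). tauto. }
  rewrite <- fa, <- (ho a (or_introl eq_refl)). apply hF.
  intros p hp. rewrite (ho (fst p)) by (right; apply in_map; auto). rewrite fz by (apply in_map; auto).
  apply hl; auto.
Qed.

Lemma Wp_H3 F x : nontriv X lt -> Wp X lt F ->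
  (exists u, lt x u /\ forall y, lt x y -> lt y u -> F x y) /\
  (exists u, lt u x /\ forall y, lt u y -> lt y x -> F x y).
Proof.
  intros nt hF.
  set (A := fun y => exists G, Wp X lt G /\ forall y', G y y' -> F x y').
  assert (hA : unif_open (Wp X lt) A).
  { intros d [G [hG hd]]. destruct (u_comp _ _ (Wp_unif X lt Hch Hu) G hG) as [G' [hG' cG]].
    exists G'. split; auto. intros d2 h2. exists G'. split; auto. intros d3 h3. apply hd. eauto. }
  apply (Wp_compat X lt Hch Hu) in hA.
  destruct (open_Iv X lt A x hA) as [a [b [[la hb] s]]].
  { exists F. split; auto. }
  assert (sF : forall y, Iv X lt a b y -> F x y).
  { intros y hy. destruct (s y hy) as [G [hG h]]. apply h. apply (u_refl _ _ (Wp_unif X lt Hch Hu)); auto. }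
  split.
  - destruct b as [b0|].
    + exists b0. split; auto. intros y h1 h2. apply sF. split; auto.
      destruct a; simpl in *; auto. eapply lt_tr; eauto.
    + destruct (nomax X lt Hch Hu nt x) as [u hu]. exists u. split; auto. intros y h1 h2. apply sF.
      split; simpl; auto. destruct a; simpl in *; auto. eapply lt_tr; eauto.
  - destruct a as [a0|].
    + exists a0. split; auto. intros y h1 h2. apply sF. split; auto.
      destruct b; simpl in *; auto. eapply lt_tr; eauto.
    + destruct (nomin X lt Hch Hu nt x) as [u hu]. exists u. split; auto. intros y h1 h2. apply sF.
      split; simpl; auto. destruct b; simpl in *; auto. eapply lt_tr; eauto.
Qed.

Lemma triv_aut : ~ nontriv X lt -> forall g h : Aut, g = h.
Proof. intros nt g h. apply aut_ext. intros x. apply (triv_eq X lt Hch nt). Qed.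

Lemma ext_ex (B : Type) (V : unif X) (UB : unif B) (e : X -> B) :
  is_completion V UB e -> (forall (g : Aut) E, V E -> V (fun x y => E (ap g x) (ap g y))) ->
  exists ext, ext_ok lt UB e ext.
Proof.
  intros Hc Hsat.
  destruct (choose_fn (fun (g : Aut) (psi : B -> B) => (forall x, psi (e x) = e (ap g x)) /\
       (forall A, unif_open UB A -> unif_open UB (fun b => A (psi b)))) (fun _ => True) (fun b => b)) as [ext hext].
  { intros g _. apply (ext_exists X B V UB e Hc (ap g)). apply Hsat. }
  exists ext. intros g. apply hext; auto.
Qed.

Lemma sb_lep Z (a b z : X) : same_block lt Z a b -> In z Z -> (lep X lt z (Some a) <-> lep X lt z (Some b)).
Proof.
  intros h hz. simpl. pose proof (h z hz) as [e1 _]. pose proof (sb_gt X lt Hch Z a b z h hz) as H.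
  split; intros [e|e].
  + left. symmetry. apply e1. symmetry. exact e.
  + right. apply H; exact e.
  + left. symmetry. apply e1. symmetry. exact e.
  + right. apply H; exact e.
Qed.
Lemma sb_gep Z (a b z : X) : same_block lt Z a b -> In z Z -> (gep X lt z (Some a) <-> gep X lt z (Some b)).
Proof.
  intros h hz. simpl. pose proof (h z hz) as [e1 e2].
  split; intros [e|e].
  + left. symmetry. apply e1. symmetry. exact e.
  + right. apply e2; exact e.
  + left. symmetry. apply e1. symmetry. exact e.
  + right. apply e2; exact e.
Qed.

Lemma part21 : continuous_chain lt ->
  forall (Bd : Type) (UBd : unif Bd) (ed : X -> Bd),
      is_completion (UXd lt) UBd ed ->
      (exists ext, ext_ok lt UBd ed ext) /\
      forall ext, ext_ok lt UBd ed ext ->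
        completion_is_closure (roelcke_unif (perm_top lt)) (@prod_unif Bd Bd UBd) ext.
Proof.
  intros Hcont Bd UBd ed Hc. pose proof (c_unif _ _ _ _ _ Hc) as HB.
  split; [apply (ext_ex Bd (UXd lt)); auto; intros g E hE; apply UXd_sat; auto|].
  intros ext hext.
  split; [apply prod_is_unif; auto|split; [apply prod_separated; apply (c_sep _ _ _ _ _ Hc)|split]].
  { apply prod_complete; auto. apply (c_complete _ _ _ _ _ Hc). }
  split.
  { intros g h e. apply aut_ext. intros x. apply (c_inj _ _ _ _ _ Hc).
    rewrite <- (proj1 (hext g) x), <- (proj1 (hext h) x), e. auto. }
  intros E. rewrite (roelcke_PB X lt Hch Hu). split.
  - intros [xs [zs hE]].
    destruct (proj1 (c_emb _ _ _ _ _ Hc (same_block lt zs)) (ex_intro _ zs (fun a b h => h))) as [F0 [hF0 hF0']].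
    exists (fun f f' => forall i, In i (map ed xs) -> F0 (f i) (f' i)). split.
    + exists (map ed xs), F0. auto.
    + intros g h H. apply hE. intros x hx. apply hF0'.
      rewrite <- (proj1 (hext g) x), <- (proj1 (hext h) x). apply H. apply in_map; auto.
  - intros [F [[bs [F0 [hF0 hF]]] hE]].
    destruct (PB_list X lt bs (fun b g h => F0 (ext g b) (ext h b))) as [xs [zs hxz]].
    2:{ exists xs, zs. intros g h Hd. apply hE, hF. apply hxz; auto. }
    intros b _.
    destruct (classic (nontriv X lt)) as [nt|nt].
    2:{ exists [], []. intros g h _. rewrite (triv_aut nt h g). apply (u_refl _ _ HB); auto. }
    destruct nt as [x0 [x1 h01]].
    assert (nt : nontriv X lt) by (exists x0, x1; auto).
    pose proof (dense X lt Hch Hu) as Hd. pose proof (nomax X lt Hch Hu nt) as Hmx.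
    pose proof (nomin X lt Hch Hu nt) as Hmn.
    assert (H1 : forall F, UXd lt F -> exists Z, forall a b, same_block lt Z a b -> F a b) by (intros F' hF'; exact hF').
    assert (Hmon : forall g : Aut, forall x y, lt x y <-> lt (ap g x) (ap g y)) by (intros g; apply ap_lt).
    assert (Hsur : forall g : Aut, forall y, exists x, ap g x = y) by (intros g; apply ap_surj).
    destruct (rlim_close X lt Hch x0 Hd Hmx Hmn Bd (UXd lt) UBd ed Hc H1 F0 hF0) as [Zr hZr].
    destruct (llim_close X lt Hch x0 Hd Hmx Hmn Bd (UXd lt) UBd ed Hc H1 F0 hF0) as [Zl hZl].
    destruct (classify X lt Hch x0 Hd Hmx Hmn Bd (UXd lt) UBd ed Hc H1 Hcont b)
      as [[x ->]|[[m hm]|[[m hm]|[hm|hm]]]].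
    + destruct (c_pull _ _ _ _ _ Hc F0 hF0) as [zs hzs]. exists [x], zs. intros g h Hd'.
      rewrite (proj1 (hext g) x), (proj1 (hext h) x). apply hzs. apply Hd'. simpl; auto.
    + exists [m], Zr. intros g h Hd'. apply (hZr (Some (ap g m)) (Some (ap h m))).
      * intros z hz. apply (sb_lep Zr); auto. apply Hd'; simpl; auto.
      * apply (rlim_transfer X lt Bd (UXd lt) UBd ed Hc (ap g) (ext g) (Some m)); auto; apply hext.
      * apply (rlim_transfer X lt Bd (UXd lt) UBd ed Hc (ap h) (ext h) (Some m)); auto; apply hext.
    + exists [m], Zl. intros g h Hd'. apply (hZl (Some (ap g m)) (Some (ap h m))).
      * intros z hz. apply (sb_gep Zl); auto. apply Hd'; simpl; auto.
      * apply (llim_transfer X lt Bd (UXd lt) UBd ed Hc (ap g) (ext g) (Some m)); auto; apply hext.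
      * apply (llim_transfer X lt Bd (UXd lt) UBd ed Hc (ap h) (ext h) (Some m)); auto; apply hext.
    + exists [], []. intros g h _. apply (hZr None None).
      * intros z _; simpl; tauto.
      * apply (rlim_transfer X lt Bd (UXd lt) UBd ed Hc (ap g) (ext g) None); auto; apply hext.
      * apply (rlim_transfer X lt Bd (UXd lt) UBd ed Hc (ap h) (ext h) None); auto; apply hext.
    + exists [], []. intros g h _. apply (hZl None None).
      * intros z _; simpl; tauto.
      * apply (llim_transfer X lt Bd (UXd lt) UBd ed Hc (ap g) (ext g) None); auto; apply hext.
      * apply (llim_transfer X lt Bd (UXd lt) UBd ed Hc (ap h) (ext h) None); auto; apply hext.
Qed.

Lemma PBV_list (V : unif X) {I} (l : list I) (Q : I -> Aut -> Aut -> Prop) : is_unif V ->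
  (forall i, In i l -> exists xs F, V F /\ forall g h : Aut, (forall x, In x xs -> F (ap g x) (ap h x)) -> Q i g h) ->
  exists xs F, V F /\ forall g h : Aut, (forall x, In x xs -> F (ap g x) (ap h x)) -> forall i, In i l -> Q i g h.
Proof.
  intros HV. induction l as [|i l IH]; intros H.
  - exists [], (fun _ _ => True). split; [apply u_full; auto|]. simpl; tauto.
  - destruct (H i (or_introl eq_refl)) as [xs [F [hF h]]].
    destruct IH as [xs' [F' [hF' h']]]. { intros; apply H; simpl; auto. }
    exists (xs ++ xs'), (fun a b => F a b /\ F' a b). split; [apply u_cap; auto|].
    intros g k Hd j [<-|hj].
    + apply h. intros x hx. apply Hd. apply in_or_app; auto.
    + apply h'; auto. intros x hx. apply Hd. apply in_or_app; auto.
Qed.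

Lemma rlim_eq (B : Type) (V : unif X) (UB : unif B) (e : X -> B) (x0 m : X) (b : B) :
  is_completion V UB e -> nontriv X lt ->
  (forall F, V F -> forall x, exists u, lt x u /\ forall y, lt x y -> lt y u -> F x y) ->
  rlim X lt B UB e (Some m) b -> b = e m.
Proof.
  intros Hc nt H3 hb. pose proof (c_unif _ _ _ _ _ Hc) as HB.
  apply (c_sep _ _ _ _ _ Hc). intros F hF.
  destruct (sym_half _ _ HB F hF) as [F1 [hF1 [s1 c1]]].
  destruct (H3 _ (c_pull _ _ _ _ _ Hc F1 hF1) m) as [u1 [hu1 hu1']].
  destruct (hb F1 hF1) as [u2 [hu2 hu2']].
  destruct (pick_r X lt Hch (dense X lt Hch Hu) (nomin X lt Hch Hu nt) (Some m) u1 u2 hu1 hu2) as [y [hy [h1 h2]]].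
  simpl in hy. apply (c1 b (e y) (e m)); [apply hu2'; simpl; auto|apply s1; apply hu1'; auto].
Qed.

Lemma llim_eq (B : Type) (V : unif X) (UB : unif B) (e : X -> B) (x0 m : X) (b : B) :
  is_completion V UB e -> nontriv X lt ->
  (forall F, V F -> forall x, exists u, lt u x /\ forall y, lt u y -> lt y x -> F x y) ->
  llim X lt B UB e (Some m) b -> b = e m.
Proof.
  intros Hc nt H3 hb. pose proof (c_unif _ _ _ _ _ Hc) as HB.
  apply (c_sep _ _ _ _ _ Hc). intros F hF.
  destruct (sym_half _ _ HB F hF) as [F1 [hF1 [s1 c1]]].
  destruct (H3 _ (c_pull _ _ _ _ _ Hc F1 hF1) m) as [u1 [hu1 hu1']].
  destruct (hb F1 hF1) as [u2 [hu2 hu2']].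
  destruct (pick_l X lt Hch (dense X lt Hch Hu) (nomax X lt Hch Hu nt) (Some m) u1 u2 hu1 hu2) as [y [hy [h1 h2]]].
  simpl in hy. apply (c1 b (e y) (e m)); [apply hu2'; simpl; auto|apply s1; apply hu1'; auto].
Qed.

Lemma part22 : continuous_chain lt ->
   forall UXp, max_equiunif lt (order_top lt) (ptop lt) UXp ->
    forall (Bp : Type) (UBp : unif Bp) (ep : X -> Bp),
      is_completion UXp UBp ep ->
      (exists ext, ext_ok lt UBp ep ext) /\
      forall ext, ext_ok lt UBp ep ext ->
        completion_is_closure (RK lt) (@prod_unif Bp Bp UBp) ext.
Proof.
  intros Hcont UXp hmax Bp UBp ep Hc. pose proof (c_unif _ _ _ _ _ Hc) as HB.
  pose proof (max_is_Wp X lt Hch Hu UXp hmax) as hs.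
  assert (hsym : same_unif (Wp X lt) UXp) by (intros E; split; intro h; apply (hs E); auto).
  assert (HV : is_unif UXp) by apply hmax.
  assert (RKe : forall E, RK lt E <-> PBV X lt UXp E).
  { intros E. rewrite (RK_PBW X lt Hch Hu). split; apply PBV_same; auto. }
  split.
  { apply (ext_ex Bp UXp); auto. destruct hmax as [[_ [_ [hsat _]]] _]. exact hsat. }
  intros ext hext.
  split; [apply prod_is_unif; auto|split; [apply prod_separated; apply (c_sep _ _ _ _ _ Hc)|split]].
  { apply prod_complete; auto. apply (c_complete _ _ _ _ _ Hc). }
  split.
  { intros g h e. apply aut_ext. intros x. apply (c_inj _ _ _ _ _ Hc).
    rewrite <- (proj1 (hext g) x), <- (proj1 (hext h) x), e. auto. }
  intros E. rewrite RKe. split.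
  - intros [xs [F [hF hE]]].
    destruct (proj1 (c_emb _ _ _ _ _ Hc F) hF) as [F0 [hF0 hF0']].
    exists (fun f f' => forall i, In i (map ep xs) -> F0 (f i) (f' i)). split.
    + exists (map ep xs), F0. auto.
    + intros g h H. apply hE. intros x hx. apply hF0'.
      rewrite <- (proj1 (hext g) x), <- (proj1 (hext h) x). apply H. apply in_map; auto.
  - intros [F [[bs [F0 [hF0 hF]]] hE]].
    destruct (PBV_list UXp bs (fun b g h => F0 (ext g b) (ext h b)) HV) as [xs [F1 [hF1 hxz]]].
    2:{ exists xs, F1. split; [exact hF1|]. intros g h Hd. apply hE, hF. apply hxz; auto. }
    intros b _.
    destruct (classic (nontriv X lt)) as [nt|nt].
    2:{ exists [], (fun _ _ => True). split; [apply u_full; auto|].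
        intros g h _. rewrite (triv_aut nt h g). apply (u_refl _ _ HB); auto. }
    destruct nt as [x0 [x1 h01]].
    assert (nt : nontriv X lt) by (exists x0, x1; auto).
    pose proof (dense X lt Hch Hu) as Hd. pose proof (nomax X lt Hch Hu nt) as Hmx.
    pose proof (nomin X lt Hch Hu nt) as Hmn.
    assert (H1 : forall F, UXp F -> exists Z, forall a b, same_block lt Z a b -> F a b).
    { intros F' hF'. apply Wp_H1. apply hs; auto. }
    assert (H3r : forall F, UXp F -> forall x, exists u, lt x u /\ forall y, lt x y -> lt y u -> F x y).
    { intros F' hF' x. apply (Wp_H3 F' x nt). apply hs; auto. }
    assert (H3l : forall F, UXp F -> forall x, exists u, lt u x /\ forall y, lt u y -> lt y x -> F x y).
    { intros F' hF' x. apply (Wp_H3 F' x nt). apply hs; auto. }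
    assert (Hmon : forall g : Aut, forall x y, lt x y <-> lt (ap g x) (ap g y)) by (intros g; apply ap_lt).
    assert (Hsur : forall g : Aut, forall y, exists x, ap g x = y) by (intros g; apply ap_surj).
    assert (pt : forall x, exists xs F, UXp F /\ forall g h : Aut, (forall y, In y xs -> F (ap g y) (ap h y)) ->
               F0 (ext g (ep x)) (ext h (ep x))).
    { intros x. exists [x], (fun a c => F0 (ep a) (ep c)). split; [apply (c_pull _ _ _ _ _ Hc); auto|].
      intros g h Hd'. rewrite (proj1 (hext g) x), (proj1 (hext h) x). apply Hd'. simpl; auto. }
    destruct (rlim_close X lt Hch x0 Hd Hmx Hmn Bp UXp UBp ep Hc H1 F0 hF0) as [Zr hZr].
    destruct (llim_close X lt Hch x0 Hd Hmx Hmn Bp UXp UBp ep Hc H1 F0 hF0) as [Zl hZl].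
    destruct (classify X lt Hch x0 Hd Hmx Hmn Bp UXp UBp ep Hc H1 Hcont b)
      as [[x ->]|[[m hm]|[[m hm]|[hm|hm]]]].
    + apply pt.
    + rewrite (rlim_eq Bp UXp UBp ep x0 m b Hc nt H3r hm). apply pt.
    + rewrite (llim_eq Bp UXp UBp ep x0 m b Hc nt H3l hm). apply pt.
    + exists [], (fun _ _ => True). split; [apply u_full; auto|]. intros g h _. apply (hZr None None).
      * intros z _; simpl; tauto.
      * apply (rlim_transfer X lt Bp UXp UBp ep Hc (ap g) (ext g) None); auto; apply hext.
      * apply (rlim_transfer X lt Bp UXp UBp ep Hc (ap h) (ext h) None); auto; apply hext.
    + exists [], (fun _ _ => True). split; [apply u_full; auto|]. intros g h _. apply (hZl None None).
      * intros z _; simpl; tauto.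
      * apply (llim_transfer X lt Bp UXp UBp ep Hc (ap g) (ext g) None); auto; apply hext.
      * apply (llim_transfer X lt Bp UXp UBp ep Hc (ap h) (ext h) None); auto; apply hext.
Qed.

End P2.

Theorem corollary4p3 (X : Type) (lt : X -> X -> Prop)
  (Hchain : is_chain lt) (Hultra : ultrahomogeneous lt) :
  (* (1.1) *)
  (same_unif (roelcke_unif (perm_top lt)) (UG lt (UXd lt)) /\
   forall (Bd : Type) (UBd : unif Bd) (ed : X -> Bd),
     is_completion (UXd lt) UBd ed ->
     completion_is_closure (roelcke_unif (perm_top lt)) (@prod_unif X Bd UBd)
       (fun g x => ed (ap g x))) /\
  (* (1.2) *)
  ((exists UXp, max_equiunif lt (order_top lt) (ptop lt) UXp) /\
   forall UXp, max_equiunif lt (order_top lt) (ptop lt) UXp ->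
     same_unif (RK lt) (UG lt UXp) /\
     forall (Bp : Type) (UBp : unif Bp) (ep : X -> Bp),
       is_completion UXp UBp ep ->
       completion_is_closure (RK lt) (@prod_unif X Bp UBp) (fun g x => ep (ap g x))) /\
  (continuous_chain lt ->
   (* (2.1) *)
   (forall (Bd : Type) (UBd : unif Bd) (ed : X -> Bd),
      is_completion (UXd lt) UBd ed ->
      (exists ext, ext_ok lt UBd ed ext) /\
      forall ext, ext_ok lt UBd ed ext ->
        completion_is_closure (roelcke_unif (perm_top lt)) (@prod_unif Bd Bd UBd) ext) /\
   (* (2.2) *)
   (forall UXp, max_equiunif lt (order_top lt) (ptop lt) UXp ->
    forall (Bp : Type) (UBp : unif Bp) (ep : X -> Bp),
      is_completion UXp UBp ep ->
      (exists ext, ext_ok lt UBp ep ext) /\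
      forall ext, ext_ok lt UBp ep ext ->
        completion_is_closure (RK lt) (@prod_unif Bp Bp UBp) ext)).
Proof.
  split; [apply part11; auto|].
  split; [apply part12; auto|].
  intros Hcont. split.
  - apply part21; auto.
  - apply part22; auto.
Qed.
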